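(* Let $a,b,c>0$ be constants. For given constants $y_0>0$ and $z_0>0$ consider the free boundary problem of finding $\hat{x}>0$ and a function $y$ on $[0,\hat x]$ with \[ b y' - a y'' - c = 0 \ \ (0<x<\hat{x}),\qquad y(\hat{x})=0,\qquad y(0)=-y_0,\qquad y'(\hat{x})=z_0 . \] Then there exists a unique such pair $(y,\hat{x})$ with $\hat x>0$. Moreover, $\hat{x}=\hat{x}(y_0,z_0)$ is strictly increasing in $y_0$ and strictly decreasing in $z_0$, and there is $\hat{x}_c(y_0)>0$ such that \[ \lim_{y_0\to\infty}\hat{x}(y_0,z_0)=\infty,\quad \lim_{y_0\downarrow 0}\hat{x}(y_0,z_0)=0\quad\text{for every } z_0>0, \] \[ \lim_{z_0\to\infty}\hat{x}(y_0,z_0)=0,\quad \lim_{z_0\downarrow 0}\hat{x}(y_0,z_0)=\hat{x}_c(y_0)\quad\text{for every } y_0>0 . \] The function $\hat{x}_c$ is strictly increasing with $\lim_{y_0\to 0}\hat{x}_c(y_0)=0$ and $\lim_{y_0\to\infty}\hat{x}_c(y_0)=\infty$. All dependences on $y_0$ and $z_0$ are analytic. *)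

(* Defs.v *)
From Stdlib Require Import Reals.
From Coquelicot Require Import Coquelicot.
Open Scope R_scope.

(* (y, xh) solves the free boundary problem with data (a,b,c,y0,z0):
   y is a function on [0,xh] (represented as y : R -> R, only values on
   [0,xh] matter), twice differentiable on (0,xh) with
   b y' - a y'' - c = 0 there, continuous at 0 from the right,
   y(xh) = 0, y(0) = -y0, and the (left) derivative of y at xh is z0. *)
Definition fbp_sol (a b c y0 z0 : R) (y : R -> R) (xh : R) : Prop :=
  (exists dy ddy : R -> R,
     forall x, 0 < x < xh ->
       is_derive y x (dy x) /\ is_derive dy x (ddy x) /\
       b * dy x - a * ddy x - c = 0) /\
  filterlim y (at_right 0) (locally (y 0)) /\
  y xh = 0 /\
  y 0 = - y0 /\
  filterlim (fun h => (y (xh + h) - y xh) / h) (at_left 0) (locally z0).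

Definition analytic_on (U : R -> Prop) (f : R -> R) : Prop :=
  forall p, U p -> exists (coef : nat -> R) (r : R), 0 < r /\
    forall t, Rabs (t - p) < r -> is_pseries coef (t - p) (f t).

Definition analytic2_on (U : R -> R -> Prop) (f : R -> R -> R) : Prop :=
  forall p q, U p q -> exists (coef : nat -> nat -> R) (r : R), 0 < r /\
    forall u v, Rabs (u - p) < r -> Rabs (v - q) < r ->
      (forall i, ex_series (fun j => Rabs (coef i j) * Rabs (u - p) ^ i * Rabs (v - q) ^ j)) /\
      ex_series (fun i => Series (fun j => Rabs (coef i j) * Rabs (u - p) ^ i * Rabs (v - q) ^ j)) /\
      is_series (fun i => Series (fun j => coef i j * (u - p) ^ i * (v - q) ^ j)) (f u v).

(* Main.v *)
Require Import Defs.
From Stdlib Require Import Reals Lra Lia Psatz FunctionalExtensionality ClassicalEpsilon.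
From Coquelicot Require Import Coquelicot.
Open Scope R_scope.

Definition om (n : nat) : R := / (INR n + 1) ^ 2.

Lemma om_pos n : 0 < om n.
Proof. unfold om. apply Rinv_0_lt_compat. pose proof (pos_INR n). nra. Qed.

Lemma om_le1 n : om n <= 1.
Proof. unfold om. pose proof (pos_INR n). rewrite <- Rinv_1.
  apply Rinv_le_contravar; nra. Qed.

Lemma div_le a b c d : 0 < b -> 0 < d -> a * d <= c * b -> a / b <= c / d.
Proof.
  intros Hb Hd H.
  replace (a / b) with (a * d * / (b * d)) by (field; lra).
  replace (c / d) with (c * b * / (b * d)) by (field; lra).
  apply Rmult_le_compat_r; [left; apply Rinv_0_lt_compat; nra | exact H].
Qed.

Lemma om_S n : om n / INR (S n) <= 4 * om (S n).
Proof.
  unfold om. rewrite S_INR. pose proof (pos_INR n). set (y := INR n) in *.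
  replace (/ (y + 1) ^ 2 / (y + 1)) with (1 / ((y+1)^3)) by (field; lra).
  replace (4 * / (y + 1 + 1) ^ 2) with (4 / ((y+1+1)^2)) by (field; lra).
  apply div_le; nra.
Qed.

Lemma om_pred n : (1 <= n)%nat -> om (n - 1) <= 4 * om n.
Proof.
  intros Hn. unfold om. rewrite minus_INR by lia.
  assert (H1 : 1 <= INR n) by (apply (le_INR 1); lia).
  set (y := INR n) in *. replace (y - INR 1 + 1) with y by (simpl; lra).
  replace (/ y ^ 2) with (1 / y^2) by (field; lra).
  replace (4 * / (y + 1) ^ 2) with (4 / ((y+1)^2)) by (field; lra).
  apply div_le; nra.
Qed.

Lemma sum_om n : sum_f_R0 om n <= 2 - / (INR n + 1).
Proof.
  induction n as [|n IH].
  - simpl. unfold om. simpl. lra.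
  - rewrite tech5. rewrite S_INR. pose proof (pos_INR n). set (y := INR n) in *.
    assert (Hq : om (S n) <= / (y + 1) - / (y + 1 + 1)).
    { unfold om. rewrite S_INR. fold y.
      replace (/ (y + 1) - / (y + 1 + 1)) with (/ ((y+1)*(y+1+1))) by (field; lra).
      apply Rinv_le_contravar; nra. }
    lra.
Qed.

Lemma om_prod_le n l : (l <= n)%nat ->
  om l * om (n - l) <= 2 / (INR n + 2) ^ 2 * (om l + om (n - l)).
Proof.
  intros Hl. unfold om. rewrite minus_INR by lia.
  pose proof (pos_INR n). pose proof (pos_INR l). pose proof (le_INR _ _ Hl).
  set (x := INR l) in *. set (y := INR n) in *.
  set (a := x + 1). set (b := y - x + 1).
  assert (Ha : 0 < a) by (unfold a; lra). assert (Hb : 0 < b) by (unfold b; lra).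
  replace (y + 2) with (a + b) by (unfold a, b; lra).
  replace (/ a ^ 2 * / b ^ 2) with (1 / (a^2 * b^2)) by (field; lra).
  replace (2 / (a + b) ^ 2 * (/ a ^ 2 + / b ^ 2)) with ((2 * (a^2 + b^2)) / ((a+b)^2 * a^2 * b^2)) by (field; lra).
  assert (Hab : 0 < a^2 * b^2) by (apply Rmult_lt_0_compat; nra).
  assert (Hab2 : 0 < (a+b)^2) by nra.
  apply div_le.
  - nra.
  - replace ((a + b) ^ 2 * a ^ 2 * b ^ 2) with ((a+b)^2 * (a^2*b^2)) by ring.
    apply Rmult_lt_0_compat; assumption.
  - replace (1 * ((a + b) ^ 2 * a ^ 2 * b ^ 2)) with ((a+b)^2 * (a^2*b^2)) by ring.
    replace (2 * (a ^ 2 + b ^ 2) * (a ^ 2 * b ^ 2)) with ((2 * (a ^ 2 + b ^ 2)) * (a ^ 2 * b ^ 2)) by ring.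
    apply Rmult_le_compat_r; [left; exact Hab|]. assert (0 <= (a-b)^2) by apply pow2_ge_0. nra.
Qed.

Lemma sum_scal_l c f n : sum_f_R0 (fun i => c * f i) n = c * sum_f_R0 f n.
Proof. induction n; simpl; [ring| rewrite IHn; ring]. Qed.

Lemma conv_om n : sum_f_R0 (fun l => om l * om (n - l)) n <= 8 * om n.
Proof.
  eapply Rle_trans.
  { apply sum_Rle. intros l Hl. apply (om_prod_le n l Hl). }
  rewrite sum_scal_l.
  rewrite plus_sum. rewrite sum_f_R0_skip.
  pose proof (sum_om n). pose proof (pos_INR n).
  assert (Hs : sum_f_R0 om n + sum_f_R0 om n <= 4).
  { assert (0 < / (INR n + 1)) by (apply Rinv_0_lt_compat; lra). lra. }
  assert (Hp : 0 <= 2 / (INR n + 2) ^ 2).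
  { apply Rmult_le_pos; [lra|]. left; apply Rinv_0_lt_compat; nra. }
  eapply Rle_trans. { apply Rmult_le_compat_l; [exact Hp| exact Hs]. }
  unfold om. set (y := INR n) in *.
  replace (2 / (y + 2) ^ 2 * 4) with (8 / (y+2)^2) by (field; lra).
  replace (8 * / (y + 1) ^ 2) with (8 / (y+1)^2) by (field; lra).
  apply div_le; nra.
Qed.

Definition padd (a b : nat -> R) (n : nat) : R := a n + b n.
Definition psc (c : R) (a : nat -> R) (n : nat) : R := c * a n.
Definition pX (a : nat -> R) (n : nat) : R := match n with O => 0 | S m => a m end.

Definition bup (a : nat -> R) (C M : R) (n : nat) : Prop :=
  forall l, (l <= n)%nat -> Rabs (a l) <= C * M ^ l * om l.

Lemma om0 : om 0 = 1.
Proof. unfold om. simpl. field. Qed.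

Lemma bup_C_nonneg a C M n : bup a C M n -> 0 <= C.
Proof. intros H. specialize (H 0%nat (Nat.le_0_l _)). rewrite om0 in H. simpl in H.
  pose proof (Rabs_pos (a 0%nat)). lra. Qed.

Lemma bup_le a C M n m : (m <= n)%nat -> bup a C M n -> bup a C M m.
Proof. intros Hmn H l Hl. apply H. lia. Qed.

Lemma bup_mono a C C' M n : 0 <= M -> C <= C' -> bup a C M n -> bup a C' M n.
Proof. intros HM HC H l Hl. eapply Rle_trans; [apply H; exact Hl|].
  apply Rmult_le_compat_r; [left; apply om_pos|]. apply Rmult_le_compat_r; [apply pow_le; exact HM|]. exact HC. Qed.

Lemma bup_mul a b Ca Cb M n : 0 <= M -> bup a Ca M n -> bup b Cb M n ->
  bup (PS_mult a b) (8 * Ca * Cb) M n.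
Proof.
  intros HM Ha Hb l Hl. unfold PS_mult.
  pose proof (bup_C_nonneg _ _ _ _ Ha) as Hca. pose proof (bup_C_nonneg _ _ _ _ Hb) as Hcb.
  eapply Rle_trans; [apply sum_f_R0_triangle|].
  eapply Rle_trans.
  { apply sum_Rle. intros i Hi. rewrite Rabs_mult.
    apply Rmult_le_compat; try apply Rabs_pos. apply Ha; lia. apply Hb; lia. }
  rewrite (sum_eq _ (fun i => (Ca * Cb * M ^ l) * (om i * om (l - i)))).
  2: { intros i Hi. replace (M ^ l) with (M ^ i * M ^ (l - i)).
       ring. rewrite <- pow_add. f_equal. lia. }
  rewrite sum_scal_l. pose proof (conv_om l).
  assert (0 <= Ca * Cb * M ^ l) by (apply Rmult_le_pos; [nra| apply pow_le; lra]).
  replace (8 * Ca * Cb * M ^ l * om l) with ((Ca * Cb * M ^ l) * (8 * om l)) by ring.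
  apply Rmult_le_compat_l; assumption.
Qed.

Lemma bup_add a b Ca Cb M n : bup a Ca M n -> bup b Cb M n -> bup (padd a b) (Ca + Cb) M n.
Proof. intros Ha Hb l Hl. unfold padd. eapply Rle_trans; [apply Rabs_triang|].
  specialize (Ha l Hl). specialize (Hb l Hl). lra. Qed.

Lemma bup_sc c a C M n : bup a C M n -> bup (psc c a) (Rabs c * C) M n.
Proof. intros Ha l Hl. unfold psc. rewrite Rabs_mult. specialize (Ha l Hl).
  replace (Rabs c * C * M ^ l * om l) with (Rabs c * (C * M ^ l * om l)) by ring.
  apply Rmult_le_compat_l; [apply Rabs_pos| exact Ha]. Qed.

Lemma bup_X a C M n : 1 <= M -> bup a C M n -> bup (pX a) (4 * C) M n.
Proof.
  intros HM Ha l Hl. pose proof (bup_C_nonneg _ _ _ _ Ha) as HC.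
  destruct l as [|m]; simpl pX.
  - rewrite Rabs_R0. rewrite om0. simpl. lra.
  - assert (Hm : (m <= n)%nat) by lia. specialize (Ha m Hm).
    pose proof (om_pred (S m) ltac:(lia)) as Ho. replace (S m - 1)%nat with m in Ho by lia.
    pose proof (om_pos m). pose proof (om_pos (S m)).
    assert (HMm : M ^ m <= M ^ S m). { simpl. assert (0 <= M ^ m) by (apply pow_le; lra). nra. }
    assert (0 <= M ^ m) by (apply pow_le; lra).
    eapply Rle_trans; [exact Ha|].
    replace (4 * C * M ^ S m * om (S m)) with (C * M ^ S m * (4 * om (S m))) by ring.
    apply Rmult_le_compat; try lra. apply Rmult_le_pos; lra.
    apply Rmult_le_compat_l; lra.
Qed.

Lemma div_step d K alpha M n X : 0 <= K -> 0 <= X -> 0 < M -> 4 * K <= alpha * M ->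
  Rabs d <= K * M ^ n * om n * X ->
  Rabs (d / INR (S n)) <= alpha * M ^ (S n) * om (S n) * X.
Proof.
  intros HK HX HM HKa Hd.
  assert (Hn : 0 < INR (S n)) by (apply lt_0_INR; lia).
  unfold Rdiv. rewrite Rabs_mult. rewrite (Rabs_inv (INR (S n))). rewrite (Rabs_right (INR (S n))) by lra.
  pose proof (om_S n) as Ho. pose proof (om_pos n). pose proof (om_pos (S n)).
  assert (HMn : 0 < M ^ n) by (apply pow_lt; lra).
  apply Rle_trans with (K * M ^ n * om n * X * / INR (S n)).
  { apply Rmult_le_compat_r; [left; apply Rinv_0_lt_compat; lra| exact Hd]. }
  replace (K * M ^ n * om n * X * / INR (S n)) with ((K * M ^ n * X) * (om n / INR (S n))) by (field; lra).
  apply Rle_trans with ((K * M ^ n * X) * (4 * om (S n))).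
  { apply Rmult_le_compat_l; [apply Rmult_le_pos; [apply Rmult_le_pos|]; lra| exact Ho]. }
  simpl. replace (K * M ^ n * X * (4 * om (S n))) with ((4 * K) * (M ^ n * X * om (S n))) by ring.
  replace (alpha * (M * M ^ n) * om (S n) * X) with ((alpha * M) * (M ^ n * X * om (S n))) by ring.
  apply Rmult_le_compat_r; [|exact HKa].
  apply Rmult_le_pos; [apply Rmult_le_pos|]; lra.
Qed.

Definition agree (a b : nat -> R) (n : nat) : Prop := forall m, (m <= n)%nat -> a m = b m.

Lemma agree_mul a b a' b' n : agree a a' n -> agree b b' n -> agree (PS_mult a b) (PS_mult a' b') n.
Proof. intros Ha Hb m Hm. unfold PS_mult. apply sum_eq. intros i Hi.
  rewrite (Ha i) by lia. rewrite (Hb (m - i)%nat) by lia. reflexivity. Qed.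

Lemma agree_add a b a' b' n : agree a a' n -> agree b b' n -> agree (padd a b) (padd a' b') n.
Proof. intros Ha Hb m Hm. unfold padd. rewrite Ha, Hb by lia. reflexivity. Qed.

Lemma agree_sc c a a' n : agree a a' n -> agree (psc c a) (psc c a') n.
Proof. intros Ha m Hm. unfold psc. rewrite Ha by lia. reflexivity. Qed.

Lemma agree_X a a' n : agree a a' n -> agree (pX a) (pX a') n.
Proof. intros Ha m Hm. destruct m; simpl; [reflexivity| apply Ha; lia]. Qed.

Fixpoint pre {V : Type} (init : V) (step : nat -> (nat -> V) -> V) (n : nat) : nat -> V :=
  match n with
  | O => fun _ => init
  | S n' => fun m => if Nat.leb m n' then pre init step n' m else step n' (pre init step n')
  end.

Definition srec {V : Type} (init : V) (step : nat -> (nat -> V) -> V) (m : nat) : V :=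
  pre init step m m.

Lemma leb_Sn n : Nat.leb (S n) n = false.
Proof. apply Nat.leb_gt. lia. Qed.

Lemma pre_stable {V} (init : V) step n m : (m <= n)%nat -> pre init step n m = srec init step m.
Proof.
  induction n as [|n IH]; intros Hm.
  - assert (m = 0%nat) by lia. subst. reflexivity.
  - simpl. destruct (Nat.leb m n) eqn:E.
    + apply Nat.leb_le in E. apply IH; exact E.
    + apply Nat.leb_gt in E. assert (m = S n) by lia. subst m.
      unfold srec.
      change (pre init step (S n) (S n)) with (if Nat.leb (S n) n then pre init step n (S n) else step n (pre init step n)).
      rewrite leb_Sn. reflexivity.
Qed.

Lemma srec_0 {V} (init : V) step : srec init step 0 = init.
Proof. reflexivity. Qed.

Lemma srec_S {V} (init : V) step n :
  (forall f g, (forall m, (m <= n)%nat -> f m = g m) -> step n f = step n g) ->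
  srec init step (S n) = step n (srec init step).
Proof.
  intros Hext. unfold srec at 1.
  change (pre init step (S n) (S n)) with (if Nat.leb (S n) n then pre init step n (S n) else step n (pre init step n)).
  rewrite leb_Sn.
  apply Hext. intros m Hm. apply pre_stable. exact Hm.
Qed.

Definition dTw (sT sR : nat -> R) := padd (PS_mult sT sR) (psc (-1) (PS_mult (PS_mult sT sT) sR)).
Definition dSw (k : R) (sT sR : nat -> R) := psc (- / k) (padd sR (psc (-1) (PS_mult sT sR))).
Definition Qw (sT sR : nat -> R) := PS_mult (PS_mult sR sR) (dTw sT sR).
Definition dRw (B0 : R) (sT sR : nat -> R) :=
  padd (psc (-1) (PS_mult (PS_mult sR sR) sT)) (padd (psc B0 (Qw sT sR)) (psc (-1) (pX (Qw sT sR)))).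

Definition g1 {X Y Z : Type} (f : nat -> X * Y * Z) (m : nat) : X := fst (fst (f m)).
Definition g2 {X Y Z : Type} (f : nat -> X * Y * Z) (m : nat) : Y := snd (fst (f m)).
Definition g3 {X Y Z : Type} (f : nat -> X * Y * Z) (m : nat) : Z := snd (f m).

Definition wstep (k B0 : R) (n : nat) (f : nat -> R * R * R) : R * R * R :=
  (dSw k (g2 f) (g3 f) n / INR (S n), dTw (g2 f) (g3 f) n / INR (S n),
   dRw B0 (g2 f) (g3 f) n / INR (S n)).

Definition wseq (k B0 s0 t0 r0 : R) := srec (s0, t0, r0) (wstep k B0).

Lemma agree_dTw sT sR sT' sR' n : agree sT sT' n -> agree sR sR' n -> agree (dTw sT sR) (dTw sT' sR') n.
Proof. intros. unfold dTw. apply agree_add; [apply agree_mul; auto|].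
  apply agree_sc. apply agree_mul; [apply agree_mul|]; auto. Qed.

Lemma agree_dSw k sT sR sT' sR' n : agree sT sT' n -> agree sR sR' n -> agree (dSw k sT sR) (dSw k sT' sR') n.
Proof. intros. unfold dSw. apply agree_sc. apply agree_add; auto. apply agree_sc. apply agree_mul; auto. Qed.

Lemma agree_dRw B0 sT sR sT' sR' n : agree sT sT' n -> agree sR sR' n -> agree (dRw B0 sT sR) (dRw B0 sT' sR') n.
Proof. intros. unfold dRw, Qw.
  assert (agree (PS_mult (PS_mult sR sR) (dTw sT sR)) (PS_mult (PS_mult sR' sR') (dTw sT' sR')) n).
  { apply agree_mul; [apply agree_mul|apply agree_dTw]; auto. }
  apply agree_add. apply agree_sc. apply agree_mul; [apply agree_mul|]; auto.
  apply agree_add; apply agree_sc; auto. apply agree_X; auto. Qed.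

Lemma wstep_ext k B0 n f g : (forall m, (m <= n)%nat -> f m = g m) -> wstep k B0 n f = wstep k B0 n g.
Proof.
  intros H. unfold wstep.
  assert (H2 : agree (g2 f) (g2 g) n) by (intros m Hm; unfold g2; rewrite H by exact Hm; reflexivity).
  assert (H3 : agree (g3 f) (g3 g) n) by (intros m Hm; unfold g3; rewrite H by exact Hm; reflexivity).
  rewrite (agree_dSw k _ _ _ _ n H2 H3 n (le_n n)).
  rewrite (agree_dTw _ _ _ _ n H2 H3 n (le_n n)).
  rewrite (agree_dRw B0 _ _ _ _ n H2 H3 n (le_n n)). reflexivity.
Qed.

Lemma wseq_S k B0 s0 t0 r0 n :
  wseq k B0 s0 t0 r0 (S n) = wstep k B0 n (wseq k B0 s0 t0 r0).
Proof. unfold wseq. apply srec_S. intros f g H. apply wstep_ext. exact H. Qed.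

Lemma wS_S k B0 s0 t0 r0 n : g1 (wseq k B0 s0 t0 r0) (S n) =
  dSw k (g2 (wseq k B0 s0 t0 r0)) (g3 (wseq k B0 s0 t0 r0)) n / INR (S n).
Proof. unfold g1 at 1. rewrite wseq_S. reflexivity. Qed.
Lemma wT_S k B0 s0 t0 r0 n : g2 (wseq k B0 s0 t0 r0) (S n) =
  dTw (g2 (wseq k B0 s0 t0 r0)) (g3 (wseq k B0 s0 t0 r0)) n / INR (S n).
Proof. unfold g2 at 1. rewrite wseq_S. reflexivity. Qed.
Lemma wR_S k B0 s0 t0 r0 n : g3 (wseq k B0 s0 t0 r0) (S n) =
  dRw B0 (g2 (wseq k B0 s0 t0 r0)) (g3 (wseq k B0 s0 t0 r0)) n / INR (S n).
Proof. unfold g3 at 1. rewrite wseq_S. reflexivity. Qed.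

Definition cTw (al : R) := 8 * al * al + 64 * al * al * al.
Definition cSw (k al : R) := / k * (al + 8 * al * al).
Definition cQw (al : R) := 8 * (8 * al * al) * cTw al.
Definition cRw (B0 al : R) := 8 * (8 * al * al) * al + Rabs B0 * cQw al + 4 * cQw al.

Lemma Rabs_m1 : Rabs (-1) = 1.
Proof. unfold Rabs. destruct (Rcase_abs (-1)); lra. Qed.

Lemma dw_bounds k B0 sT sR al N n : 0 < k -> 0 <= al -> 1 <= N ->
  bup sT al N n -> bup sR al N n ->
  bup (dTw sT sR) (cTw al) N n /\ bup (dSw k sT sR) (cSw k al) N n /\ bup (dRw B0 sT sR) (cRw B0 al) N n.
Proof.
  intros Hk Hal HN HT HR.
  assert (HN0 : 0 <= N) by lra.
  assert (HTR := bup_mul _ _ _ _ _ _ HN0 HT HR).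
  assert (HTT := bup_mul _ _ _ _ _ _ HN0 HT HT).
  assert (HRR := bup_mul _ _ _ _ _ _ HN0 HR HR).
  assert (HTTR := bup_mul _ _ _ _ _ _ HN0 HTT HR).
  assert (HdT : bup (dTw sT sR) (cTw al) N n).
  { unfold dTw. eapply bup_mono; [exact HN0| | apply bup_add; [exact HTR| apply bup_sc; exact HTTR]].
    rewrite Rabs_m1. unfold cTw. lra. }
  split; [exact HdT|]. split.
  - unfold dSw. eapply bup_mono; [exact HN0| | apply bup_sc; apply bup_add; [exact HR| apply bup_sc; exact HTR]].
    rewrite Rabs_m1. rewrite Rabs_Ropp. rewrite Rabs_right by (left; apply Rinv_0_lt_compat; lra).
    unfold cSw. lra.
  - unfold dRw.
    assert (HQ : bup (Qw sT sR) (cQw al) N n) by (unfold Qw, cQw; apply bup_mul; assumption).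
    assert (HRRT := bup_mul _ _ _ _ _ _ HN0 HRR HT).
    eapply bup_mono; [exact HN0| | apply bup_add; [apply bup_sc; exact HRRT| apply bup_add; [apply bup_sc; exact HQ| apply bup_sc; apply bup_X; [exact HN| exact HQ]]]].
    rewrite !Rabs_m1. unfold cRw. lra.
Qed.

Lemma w_bounds k B0 s0 t0 r0 al N : 0 < k -> 1 <= al -> Rabs s0 <= al -> Rabs t0 <= al -> Rabs r0 <= al ->
  1 <= N -> 4 * cSw k al <= al * N -> 4 * cTw al <= al * N -> 4 * cRw B0 al <= al * N ->
  forall n, bup (g1 (wseq k B0 s0 t0 r0)) al N n /\ bup (g2 (wseq k B0 s0 t0 r0)) al N n /\
            bup (g3 (wseq k B0 s0 t0 r0)) al N n.
Proof.
  intros Hk Hal Hs Ht Hr HN H1 H2 H3.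
  assert (Hc : forall x, Rabs x <= al -> Rabs x <= al * N ^ 0 * om 0).
  { intros x Hx. rewrite om0. simpl. lra. }
  induction n as [|n IH].
  - split; [|split]; intros l Hl; assert (l = 0%nat) by lia; subst l; apply Hc; assumption.
  - destruct IH as [IS [IT IR]].
    destruct (dw_bounds k B0 _ _ al N n Hk ltac:(lra) HN IT IR) as [BT [BS BR]].
    assert (cpos : 0 <= cTw al /\ 0 <= cSw k al /\ 0 <= cRw B0 al).
    { split; [|split]; eapply bup_C_nonneg; eassumption. }
    assert (Hstep : forall (a d : nat -> R) c, bup a al N n -> bup d c N n -> 0 <= c -> 4 * c <= al * N ->
               a (S n) = d n / INR (S n) -> bup a al N (S n)).
    { intros a d c Ha Hd Hc0 Hc4 Heq l Hl. destruct (Nat.eq_dec l (S n)) as [->|Hne].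
      - rewrite Heq. rewrite <- (Rmult_1_r (al * N ^ S n * om (S n))).
        apply div_step with (K := c); try lra. rewrite Rmult_1_r. apply Hd. lia.
      - apply Ha. lia. }
    split; [|split].
    + eapply Hstep; [exact IS| exact BS| lra| exact H1| apply wS_S].
    + eapply Hstep; [exact IT| exact BT| lra| exact H2| apply wT_S].
    + eapply Hstep; [exact IR| exact BR| lra| exact H3| apply wR_S].
Qed.

Definition mult2 (a b : nat -> nat -> R) (i : nat) : nat -> R :=
  fun j => sum_f_R0 (fun l => PS_mult (a l) (b (i - l)%nat) j) i.
Definition m4 (sT sR : nat -> nat -> R) := mult2 (mult2 (mult2 sT sR) sR) sR.

Definition V3 := ((nat -> R) * (nat -> R) * (nat -> R))%type.

Definition tstep (k B0 : R) (i : nat) (f : nat -> V3) : V3 :=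
  (fun j => g3 f i j / INR (S i),
   fun j => (- k * mult2 (g2 f) (g3 f) i j) / INR (S i),
   fun j => (- k * (B0 * m4 (g2 f) (g3 f) i j - pX (m4 (g2 f) (g3 f) i) j)) / INR (S i)).

Definition tseq (k B0 : R) (S0 T0 R0 : nat -> R) := srec (S0, T0, R0) (tstep k B0).

Definition agree2 (a b : nat -> nat -> R) (n : nat) : Prop := forall m, (m <= n)%nat -> a m = b m.

Lemma agree2_mult2 a b a' b' n : agree2 a a' n -> agree2 b b' n -> agree2 (mult2 a b) (mult2 a' b') n.
Proof. intros Ha Hb m Hm. unfold mult2. apply functional_extensionality. intros j.
  apply sum_eq. intros l Hl. rewrite (Ha l) by lia. rewrite (Hb (m - l)%nat) by lia. reflexivity. Qed.

Lemma tstep_ext k B0 n f g : (forall m, (m <= n)%nat -> f m = g m) -> tstep k B0 n f = tstep k B0 n g.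
Proof.
  intros H. unfold tstep.
  assert (H2 : agree2 (g2 f) (g2 g) n) by (intros m Hm; unfold g2; rewrite H by exact Hm; reflexivity).
  assert (H3 : agree2 (g3 f) (g3 g) n) by (intros m Hm; unfold g3; rewrite H by exact Hm; reflexivity).
  assert (HM : agree2 (m4 (g2 f) (g3 f)) (m4 (g2 g) (g3 g)) n).
  { unfold m4. repeat apply agree2_mult2; auto. }
  rewrite (H3 n (le_n n)). rewrite (agree2_mult2 _ _ _ _ n H2 H3 n (le_n n)).
  rewrite (HM n (le_n n)). reflexivity.
Qed.

Lemma tseq_S k B0 S0 T0 R0 n :
  tseq k B0 S0 T0 R0 (S n) = tstep k B0 n (tseq k B0 S0 T0 R0).
Proof. unfold tseq. apply srec_S. intros f g H. apply tstep_ext. exact H. Qed.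

Definition bup2 (a : nat -> nat -> R) (C M N : R) (i : nat) : Prop :=
  forall l, (l <= i)%nat -> forall j, Rabs (a l j) <= C * M ^ l * om l * (N ^ j * om j).

Lemma bup2_row a C M N i l : 0 <= N -> bup2 a C M N i -> (l <= i)%nat -> forall n, bup (a l) (C * M ^ l * om l) N n.
Proof. intros HN H Hl n j Hj. specialize (H l Hl j). rewrite <- Rmult_assoc in H. exact H. Qed.

Lemma bup2_mul a b Ca Cb M N i : 0 <= M -> 0 <= N -> bup2 a Ca M N i -> bup2 b Cb M N i ->
  bup2 (mult2 a b) (64 * Ca * Cb) M N i.
Proof.
  intros HM HN Ha Hb l Hl j. unfold mult2.
  assert (Hca : 0 <= Ca).
  { specialize (Ha 0%nat (Nat.le_0_l _) 0%nat). rewrite om0 in Ha. simpl in Ha.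
    pose proof (Rabs_pos (a 0%nat 0%nat)). lra. }
  assert (Hcb : 0 <= Cb).
  { specialize (Hb 0%nat (Nat.le_0_l _) 0%nat). rewrite om0 in Hb. simpl in Hb.
    pose proof (Rabs_pos (b 0%nat 0%nat)). lra. }
  eapply Rle_trans; [apply sum_f_R0_triangle|].
  eapply Rle_trans.
  { apply sum_Rle. intros m Hm.
    assert (H1 := bup2_row a Ca M N i m HN Ha ltac:(lia) j).
    assert (H2 := bup2_row b Cb M N i (l - m)%nat HN Hb ltac:(lia) j).
    exact (bup_mul _ _ _ _ _ _ HN H1 H2 j (le_n j)). }
  rewrite (sum_eq _ (fun m => (8 * Ca * Cb * M ^ l * (N ^ j * om j)) * (om m * om (l - m)))).
  2: { intros m Hm. replace (M ^ l) with (M ^ m * M ^ (l - m)).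
       ring. rewrite <- pow_add. f_equal. lia. }
  rewrite sum_scal_l. pose proof (conv_om l).
  assert (0 <= 8 * Ca * Cb * M ^ l * (N ^ j * om j)).
  { pose proof (om_pos j). repeat apply Rmult_le_pos; try lra; apply pow_le; lra. }
  replace (64 * Ca * Cb * M ^ l * om l * (N ^ j * om j)) with ((8 * Ca * Cb * M ^ l * (N ^ j * om j)) * (8 * om l)) by ring.
  apply Rmult_le_compat_l; assumption.
Qed.

Definition cT2 (k al : R) := k * (64 * al * al).
Definition c4 (al : R) := 64 * (64 * (64 * al * al) * al) * al.
Definition cR2 (k B0 al : R) := k * ((Rabs B0 + 4) * c4 al).

Lemma t_bounds k B0 S0 T0 R0 al M N : 0 < k -> 1 <= al -> 1 <= M -> 1 <= N ->
  (forall n, bup S0 al N n /\ bup T0 al N n /\ bup R0 al N n) ->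
  4 * al <= al * M -> 4 * cT2 k al <= al * M -> 4 * cR2 k B0 al <= al * M ->
  forall i, bup2 (g1 (tseq k B0 S0 T0 R0)) al M N i /\ bup2 (g2 (tseq k B0 S0 T0 R0)) al M N i /\
            bup2 (g3 (tseq k B0 S0 T0 R0)) al M N i.
Proof.
  intros Hk Hal HM HN H0 H1 H2 H3.
  assert (HM0 : 0 <= M) by lra. assert (HN0 : 0 <= N) by lra.
  induction i as [|i IH].
  - assert (Hr : forall (a : nat -> R), (forall n, bup a al N n) -> forall l, (l <= 0)%nat -> forall j,
               Rabs (a j) <= al * M ^ l * om l * (N ^ j * om j)).
    { intros a Ha l Hl j. assert (l = 0%nat) by lia. subst l. rewrite om0. simpl.
      specialize (Ha j j (le_n j)). lra. }
    split; [|split]; intros l Hl j; assert (l = 0%nat) by lia; subst l.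
    + change (g1 (tseq k B0 S0 T0 R0) 0%nat) with S0. apply (Hr S0 (fun n => proj1 (H0 n)) 0%nat (le_n 0)).
    + change (g2 (tseq k B0 S0 T0 R0) 0%nat) with T0. apply (Hr T0 (fun n => proj1 (proj2 (H0 n))) 0%nat (le_n 0)).
    + change (g3 (tseq k B0 S0 T0 R0) 0%nat) with R0. apply (Hr R0 (fun n => proj2 (proj2 (H0 n))) 0%nat (le_n 0)).
  - destruct IH as [IS [IT IR]].
    set (f := tseq k B0 S0 T0 R0).
    assert (HTR := bup2_mul _ _ _ _ _ _ _ HM0 HN0 IT IR).
    assert (H4 : bup2 (m4 (g2 f) (g3 f)) (c4 al) M N i).
    { unfold m4, c4. repeat apply bup2_mul; auto. }
    assert (Hrow : forall (a : nat -> nat -> R), bup2 a al M N i -> forall (d : nat -> R) K, 0 <= K -> 4 * K <= al * M ->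
              (forall j, Rabs (d j) <= K * M ^ i * om i * (N ^ j * om j)) ->
              (forall j, a (S i) j = d j / INR (S i)) -> bup2 a al M N (S i)).
    { intros a Ha d K HK HK4 Hd Heq l Hl j. destruct (Nat.eq_dec l (S i)) as [->|Hne].
      - rewrite Heq. apply div_step with (K := K); try lra.
        + apply Rmult_le_pos; [apply pow_le; lra| left; apply om_pos].
        + apply Hd.
      - apply Ha. lia. }
    assert (Hal0 : 0 <= al) by lra.
    split; [|split].
    + apply (Hrow _ IS (fun j => g3 f i j) al); [exact Hal0| exact H1| |].
      * intros j. apply (IR i (le_n i) j).
      * intros j. unfold f, g1 at 1. rewrite tseq_S. reflexivity.
    + apply (Hrow _ IT (fun j => - k * mult2 (g2 f) (g3 f) i j) (cT2 k al)); [| exact H2| |].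
      * unfold cT2. apply Rmult_le_pos; [lra|]. assert (0 <= al * al) by nra. lra.
      * intros j. rewrite Rabs_mult. rewrite Rabs_Ropp, (Rabs_right k) by lra.
        specialize (HTR i (le_n i) j). unfold cT2.
        replace (k * (64 * al * al) * M ^ i * om i * (N ^ j * om j)) with (k * (64 * al * al * M ^ i * om i * (N ^ j * om j))) by ring.
        apply Rmult_le_compat_l; [lra| exact HTR].
      * intros j. unfold f, g2 at 1. rewrite tseq_S. reflexivity.
    + assert (Hc4 : 0 <= c4 al) by (unfold c4; repeat apply Rmult_le_pos; lra).
      apply (Hrow _ IR (fun j => - k * (B0 * m4 (g2 f) (g3 f) i j - pX (m4 (g2 f) (g3 f) i) j)) (cR2 k B0 al)); [| exact H3| |].
      * unfold cR2. apply Rmult_le_pos; [lra|]. apply Rmult_le_pos; [|exact Hc4].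
        pose proof (Rabs_pos B0); lra.
      * intros j. rewrite Rabs_mult. rewrite Rabs_Ropp, (Rabs_right k) by lra.
        assert (Hb := bup2_row _ _ _ _ _ i HN0 H4 (le_n i)).
        assert (HX := bup_X _ _ _ j HN (Hb j) j (le_n j)).
        specialize (H4 i (le_n i) j).
        assert (Hmid : Rabs (B0 * m4 (g2 f) (g3 f) i j - pX (m4 (g2 f) (g3 f) i) j) <=
                       (Rabs B0 + 4) * c4 al * M ^ i * om i * (N ^ j * om j)).
        { unfold Rminus. eapply Rle_trans; [apply Rabs_triang|]. rewrite Rabs_Ropp, Rabs_mult.
          assert (Rabs B0 * Rabs (m4 (g2 f) (g3 f) i j) <= Rabs B0 * (c4 al * M ^ i * om i * (N ^ j * om j))).
          { apply Rmult_le_compat_l; [apply Rabs_pos| exact H4]. }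
          lra. }
        unfold cR2.
        replace (k * ((Rabs B0 + 4) * c4 al) * M ^ i * om i * (N ^ j * om j)) with
                (k * ((Rabs B0 + 4) * c4 al * M ^ i * om i * (N ^ j * om j))) by ring.
        apply Rmult_le_compat_l; [lra| exact Hmid].
      * intros j. unfold f, g3 at 1. rewrite tseq_S. reflexivity.
Qed.

Definition Gd (a : nat -> R) (M : R) : Prop := exists C, forall n, bup a C M n.

Lemma Gd_radius a M : 0 < M -> Gd a M -> Rbar_le (/ M) (CV_radius a).
Proof.
  intros HM [C HC]. assert (HC0 := bup_C_nonneg _ _ _ _ (HC 0%nat)).
  destruct (CV_radius_bounded a) as [Hub _]. apply Hub.
  exists C. intros n. specialize (HC n n (le_n n)). rewrite Rabs_mult.
  rewrite <- RPow_abs. rewrite (Rabs_right (/ M)) by (left; apply Rinv_0_lt_compat; lra).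
  rewrite pow_inv. pose proof (om_le1 n). pose proof (om_pos n).
  assert (HMn : 0 < M ^ n) by (apply pow_lt; lra).
  apply Rle_trans with (C * M ^ n * om n * / M ^ n).
  { apply Rmult_le_compat_r; [left; apply Rinv_0_lt_compat; lra| exact HC]. }
  replace (C * M ^ n * om n * / M ^ n) with (C * om n) by (field; lra). nra.
Qed.

Definition RL (a : nat -> R) (x : R) : Prop := Rbar_lt (Rabs x) (CV_radius a).

Lemma Gd_RL a M x : 0 < M -> Gd a M -> Rabs x < / M -> RL a x.
Proof. intros HM HG Hx. unfold RL. eapply Rbar_lt_le_trans; [| apply Gd_radius; eassumption]. exact Hx. Qed.

Lemma Gd_mul a b M : 0 <= M -> Gd a M -> Gd b M -> Gd (PS_mult a b) M.
Proof. intros HM [Ca Ha] [Cb Hb]. exists (8 * Ca * Cb). intros n. apply bup_mul; auto. Qed.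
Lemma Gd_add a b M : Gd a M -> Gd b M -> Gd (padd a b) M.
Proof. intros [Ca Ha] [Cb Hb]. exists (Ca + Cb). intros n. apply bup_add; auto. Qed.
Lemma Gd_sc c a M : Gd a M -> Gd (psc c a) M.
Proof. intros [Ca Ha]. exists (Rabs c * Ca). intros n. apply bup_sc; auto. Qed.
Lemma Gd_X a M : 1 <= M -> Gd a M -> Gd (pX a) M.
Proof. intros HM [Ca Ha]. exists (4 * Ca). intros n. apply bup_X; auto. Qed.

Lemma RL_ex a x : RL a x -> ex_series (fun n => a n * x ^ n).
Proof. intros H. apply ex_pseries_R. apply CV_radius_inside. exact H. Qed.

Lemma PSeries_padd a b x : RL a x -> RL b x -> PSeries (padd a b) x = PSeries a x + PSeries b x.
Proof. intros Ha Hb. unfold PSeries, padd. rewrite <- Series_plus by (apply RL_ex; assumption).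
  apply Series_ext. intros n. ring. Qed.

Lemma PSeries_psc c a x : PSeries (psc c a) x = c * PSeries a x.
Proof. unfold PSeries, psc. rewrite <- Series_scal_l. apply Series_ext. intros n. ring. Qed.

Lemma PSeries_pX a x : PSeries (pX a) x = x * PSeries a x.
Proof. rewrite <- PSeries_incr_1. unfold PSeries. apply Series_ext. intros n. destruct n; reflexivity. Qed.

Lemma PSeries_pmul a b x : RL a x -> RL b x -> PSeries (PS_mult a b) x = PSeries a x * PSeries b x.
Proof. intros. apply PSeries_mult; assumption. Qed.

Lemma ex_abs_geom a C N x : (forall n, Rabs (a n) <= C * N ^ n) -> 0 <= N -> N * Rabs x <= / 2 ->
  ex_series (fun n => Rabs (a n * x ^ n)) /\ ex_series (fun n => C * (N * Rabs x) ^ n) /\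
  (forall n, 0 <= Rabs (a n * x ^ n) <= C * (N * Rabs x) ^ n) /\
  is_series (fun n => (N * Rabs x) ^ n) (/ (1 - N * Rabs x)).
Proof.
  intros Hb HN Hx.
  assert (Hq : Rabs (N * Rabs x) < 1) by (rewrite Rabs_right; [lra| apply Rle_ge, Rmult_le_pos; [lra| apply Rabs_pos]]).
  pose proof (is_series_geom _ Hq) as Hg.
  assert (Hle : forall n, 0 <= Rabs (a n * x ^ n) <= C * (N * Rabs x) ^ n).
  { intros n. split; [apply Rabs_pos|]. rewrite Rabs_mult, <- RPow_abs, Rpow_mult_distr.
    replace (C * (N ^ n * Rabs x ^ n)) with ((C * N ^ n) * Rabs x ^ n) by ring.
    apply Rmult_le_compat_r; [apply pow_le, Rabs_pos| apply Hb]. }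
  assert (Hex : ex_series (fun n => C * (N * Rabs x) ^ n)).
  { apply ex_series_scal_l with (c := C) (a := fun n => (N * Rabs x) ^ n). eexists; exact Hg. }
  assert (Hexa : ex_series (fun n => Rabs (a n * x ^ n))).
  { apply (@ex_series_le R_AbsRing R_CompleteNormedModule _ (fun n => C * (N * Rabs x) ^ n)); [| exact Hex].
    intros n. unfold norm; simpl. rewrite Rabs_Rabsolu. apply Hle. }
  auto.
Qed.

Lemma PSeries_abs_bound a C N x : (forall n, Rabs (a n) <= C * N ^ n) -> 0 <= N -> N * Rabs x <= / 2 ->
  Rabs (PSeries a x) <= 2 * C.
Proof.
  intros Hb HN Hx.
  assert (HC : 0 <= C) by (specialize (Hb 0%nat); simpl in Hb; pose proof (Rabs_pos (a 0%nat)); lra).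
  destruct (ex_abs_geom a C N x Hb HN Hx) as [Hexa [Hex [Hle Hg]]].
  unfold PSeries. eapply Rle_trans; [apply Series_Rabs; exact Hexa|].
  eapply Rle_trans; [apply Series_le; [exact Hle| exact Hex]|].
  rewrite Series_scal_l. rewrite (is_series_unique (pow (N * Rabs x)) _ Hg).
  assert (0 <= N * Rabs x) by (apply Rmult_le_pos; [lra| apply Rabs_pos]).
  assert (/ (1 - N * Rabs x) <= 2).
  { replace 2 with (/ (/ 2)) by (field). apply Rinv_le_contravar; lra. }
  nra.
Qed.

Lemma PSeries_diff_bound a C N x : (forall n, Rabs (a n) <= C * N ^ n) -> 0 <= N -> N * Rabs x <= / 2 ->
  Rabs (PSeries a x - a 0%nat) <= 2 * C * N * Rabs x.
Proof.
  intros Hb HN Hx.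
  destruct (ex_abs_geom a C N x Hb HN Hx) as [Hexa _].
  assert (Hex : ex_pseries a x) by (apply ex_pseries_R; apply ex_series_Rabs; exact Hexa).
  rewrite (PSeries_decr_1 a x Hex).
  replace (a 0%nat + x * PSeries (PS_decr_1 a) x - a 0%nat) with (x * PSeries (PS_decr_1 a) x) by ring.
  rewrite Rabs_mult.
  assert (Hb' : forall n, Rabs (PS_decr_1 a n) <= (C * N) * N ^ n).
  { intros n. unfold PS_decr_1. replace (C * N * N ^ n) with (C * N ^ (S n)) by (simpl; ring). apply Hb. }
  pose proof (PSeries_abs_bound _ _ N x Hb' HN Hx).
  pose proof (Rabs_pos x). nra.
Qed.

Lemma PSeries_fsum (F : nat -> nat -> R) i x : (forall l, ex_series (fun n => F l n * x ^ n)) ->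
  ex_series (fun n => sum_f_R0 (fun l => F l n) i * x ^ n) /\
  PSeries (fun n => sum_f_R0 (fun l => F l n) i) x = sum_f_R0 (fun l => PSeries (F l) x) i.
Proof.
  intros H. induction i as [|i [IH1 IH2]].
  - simpl. split; [apply H| reflexivity].
  - split.
    + eapply ex_series_ext; [| apply (ex_series_plus _ _ IH1 (H (S i)))].
      intros n. simpl. unfold plus. simpl. ring.
    + simpl. rewrite <- IH2. unfold PSeries. rewrite <- Series_plus by (auto).
      apply Series_ext. intros n. ring.
Qed.

Definition GA (a : nat -> nat -> R) (N : R) : Prop := forall l, Gd (a l) N.

Lemma GA_of_bup2 a C M N : 0 <= N -> (forall i, bup2 a C M N i) -> GA a N.
Proof. intros HN H l. exists (C * M ^ l * om l). intros n. apply (bup2_row a C M N l l HN (H l) (le_n l)). Qed.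

Lemma ev_mult2 a b N w i : 0 < N -> GA a N -> GA b N -> Rabs w < / N ->
  PSeries (mult2 a b i) w = PS_mult (fun l => PSeries (a l) w) (fun l => PSeries (b l) w) i.
Proof.
  intros HN Ha Hb Hw. unfold mult2, PS_mult at 2.
  assert (Hr : forall l, ex_series (fun n => PS_mult (a l) (b (i - l)%nat) n * w ^ n)).
  { intros l. apply ex_pseries_R. apply ex_pseries_mult; eapply Gd_RL; eauto. }
  destruct (PSeries_fsum (fun l j => PS_mult (a l) (b (i - l)%nat) j) i w Hr) as [_ E].
  rewrite E. apply sum_eq. intros l Hl. apply PSeries_mult; eapply Gd_RL; eauto.
Qed.

Lemma GA_mult2 a b Ca Cb M N : 0 <= M -> 0 <= N -> (forall i, bup2 a Ca M N i) -> (forall i, bup2 b Cb M N i) ->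
  forall i, bup2 (mult2 a b) (64 * Ca * Cb) M N i.
Proof. intros. apply bup2_mul; auto. Qed.

Lemma PSeries_div (a : nat -> R) d x : PSeries (fun j => a j / d) x = PSeries a x / d.
Proof. unfold PSeries, Rdiv. rewrite <- Series_scal_r. apply Series_ext. intros n. ring. Qed.

Definition ev (a : nat -> nat -> R) (w : R) : nat -> R := fun i => PSeries (a i) w.

Lemma tau_rec k B0 S0 T0 R0 al M N w : 0 < k -> 1 <= al -> 1 <= M -> 1 <= N ->
  (forall n, bup S0 al N n /\ bup T0 al N n /\ bup R0 al N n) ->
  4 * al <= al * M -> 4 * cT2 k al <= al * M -> 4 * cR2 k B0 al <= al * M -> Rabs w < / N ->
  let f := tseq k B0 S0 T0 R0 in
  forall i,
  ev (g1 f) w (S i) = ev (g3 f) w i / INR (S i) /\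
  ev (g2 f) w (S i) = (- k * PS_mult (ev (g2 f) w) (ev (g3 f) w) i) / INR (S i) /\
  ev (g3 f) w (S i) = (- k * ((B0 - w) * PS_mult (PS_mult (PS_mult (ev (g2 f) w) (ev (g3 f) w)) (ev (g3 f) w)) (ev (g3 f) w) i)) / INR (S i).
Proof.
  intros Hk Hal HM HN H0 H1 H2 H3 Hw f i.
  pose proof (t_bounds k B0 S0 T0 R0 al M N Hk Hal HM HN H0 H1 H2 H3) as TB. fold f in TB.
  assert (HM0 : 0 <= M) by lra. assert (HN0 : 0 <= N) by lra. assert (HNp : 0 < N) by lra.
  assert (GT : GA (g2 f) N) by (apply (GA_of_bup2 _ al M N HN0); intros j; apply TB).
  assert (GR : GA (g3 f) N) by (apply (GA_of_bup2 _ al M N HN0); intros j; apply TB).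
  assert (BTR : forall j, bup2 (mult2 (g2 f) (g3 f)) (64 * al * al) M N j).
  { apply GA_mult2; auto; intros j; apply TB. }
  assert (BTRR : forall j, bup2 (mult2 (mult2 (g2 f) (g3 f)) (g3 f)) (64 * (64 * al * al) * al) M N j).
  { apply GA_mult2; auto; intros j; apply TB. }
  assert (BTRRR : forall j, bup2 (m4 (g2 f) (g3 f)) (64 * (64 * (64 * al * al) * al) * al) M N j).
  { unfold m4. apply GA_mult2; auto; intros j; apply TB. }
  assert (GTR : GA (mult2 (g2 f) (g3 f)) N) by (eapply GA_of_bup2; eauto).
  assert (GTRR : GA (mult2 (mult2 (g2 f) (g3 f)) (g3 f)) N) by (eapply GA_of_bup2; eauto).
  assert (G4 : GA (m4 (g2 f) (g3 f)) N) by (eapply GA_of_bup2; eauto).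
  assert (E1 : ev (mult2 (g2 f) (g3 f)) w = PS_mult (ev (g2 f) w) (ev (g3 f) w)).
  { apply functional_extensionality. intros l. apply (ev_mult2 _ _ N); auto. }
  assert (E2 : ev (mult2 (mult2 (g2 f) (g3 f)) (g3 f)) w = PS_mult (PS_mult (ev (g2 f) w) (ev (g3 f) w)) (ev (g3 f) w)).
  { apply functional_extensionality. intros l. unfold ev at 1. rewrite (ev_mult2 _ _ N); auto. fold (ev (mult2 (g2 f) (g3 f)) w). rewrite E1. reflexivity. }
  assert (E3 : ev (m4 (g2 f) (g3 f)) w = PS_mult (PS_mult (PS_mult (ev (g2 f) w) (ev (g3 f) w)) (ev (g3 f) w)) (ev (g3 f) w)).
  { apply functional_extensionality. intros l. unfold ev at 1, m4. rewrite (ev_mult2 _ _ N); auto.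
    fold (ev (mult2 (mult2 (g2 f) (g3 f)) (g3 f)) w). rewrite E2. reflexivity. }
  split; [|split].
  - unfold ev at 1, g1 at 1. unfold f. rewrite tseq_S. simpl. rewrite PSeries_div. reflexivity.
  - unfold ev at 1, g2 at 1. unfold f. rewrite tseq_S. simpl. rewrite PSeries_div. fold f.
    f_equal. rewrite <- E1. unfold ev.
    replace (fun j => - k * mult2 (g2 f) (g3 f) i j) with (psc (- k) (mult2 (g2 f) (g3 f) i)) by reflexivity.
    rewrite PSeries_psc. reflexivity.
  - unfold ev at 1, g3 at 1. unfold f. rewrite tseq_S. simpl. rewrite PSeries_div. fold f.
    f_equal. rewrite <- E3. unfold ev.
    assert (RL4 : RL (m4 (g2 f) (g3 f) i) w) by (eapply Gd_RL; eauto).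
    assert (RL4X : RL (pX (m4 (g2 f) (g3 f) i)) w) by (eapply Gd_RL; eauto; apply Gd_X; auto).
    replace (fun j => - k * (B0 * m4 (g2 f) (g3 f) i j - pX (m4 (g2 f) (g3 f) i) j)) with
      (psc (- k) (padd (psc B0 (m4 (g2 f) (g3 f) i)) (psc (-1) (pX (m4 (g2 f) (g3 f) i))))).
    2: { apply functional_extensionality. intros j. unfold psc, padd. ring. }
    rewrite PSeries_psc. rewrite PSeries_padd.
    + rewrite !PSeries_psc, PSeries_pX. ring.
    + eapply Gd_RL; eauto. apply Gd_sc. auto.
    + eapply Gd_RL; eauto. apply Gd_sc. apply Gd_X; auto.
Qed.

Definition Ff (k A x z : R) : R := A * x - (A - z) * (1 - exp (- (k * x))) / k.

Lemma between_abs x y : Rmin 0 x <= y <= Rmax 0 x -> Rabs y <= Rabs x.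
Proof.
  intros [H1 H2]. unfold Rmin, Rmax in *. destruct (Rle_dec 0 x).
  - rewrite (Rabs_right y) by lra. rewrite (Rabs_right x) by lra. lra.
  - rewrite (Rabs_left1 x) by lra. unfold Rabs. destruct (Rcase_abs y); lra.
Qed.

Lemma const_zero (f : R -> R) r : (forall x, Rabs x < r -> is_derive f x 0) -> forall x, Rabs x < r -> f x = f 0.
Proof.
  intros H x Hx.
  destruct (MVT_gen f 0 x (fun _ => 0)) as [c [Hc E]].
  - intros y Hy. apply H. assert (Rabs y <= Rabs x) by (apply between_abs; lra). lra.
  - intros y Hy. apply continuity_pt_filterlim. apply (@ex_derive_continuous R_AbsRing R_NormedModule). exists 0. apply H.
    assert (Rabs y <= Rabs x) by (apply between_abs; lra). lra.
  - lra.
Qed.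

Ltac dsub H := match type of H with is_derive ?f ?x ?l =>
  let E := fresh in assert (E : Derive (fun t => f t) x = l) by (apply is_derive_unique; exact H);
  rewrite E; clear E end.

Ltac solve_ex := repeat split; try (eexists; eassumption); try lra.

Lemma id_tau (k A v : R) (S T Rho : R -> R) r : 0 < k ->
  (forall t, Rabs t < r -> is_derive S t (Rho t) /\ is_derive T t (- k * T t * Rho t) /\
        is_derive Rho t (- k * (A - v) * T t * Rho t ^ 3) /\ 0 < Rho t) ->
  T 0 = exp (- (k * S 0)) -> Rho 0 * (A - (A - v) * T 0) = 1 ->
  forall t, Rabs t < r ->
  Ff k A (S t) v = Ff k A (S 0) v + t /\ T t = exp (- (k * S t)) /\ Rho t * (A - (A - v) * T t) = 1.
Proof.
  intros Hk HD HT0 HR0 t Ht.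
  assert (G : forall x, Rabs x < r -> T x * exp (k * S x) = 1).
  { intros x Hx. rewrite (const_zero (fun y => T y * exp (k * S y)) r).
    - rewrite HT0, <- exp_plus. replace (- (k * S 0) + k * S 0) with 0 by ring. apply exp_0.
    - intros y Hy. destruct (HD y Hy) as [HS [HTd [HRd HRp]]].
      evar (d : R). replace 0 with d. 
      + unfold d. auto_derive.
        * solve_ex.
        * dsub HTd. dsub HS. reflexivity.
      + unfold d. ring.
    - exact Hx. }
  assert (Tt : forall x, Rabs x < r -> T x = exp (- (k * S x))).
  { intros x Hx. pose proof (G x Hx) as Gx.
    replace (T x) with (T x * exp (k * S x) * exp (- (k * S x))).
    - rewrite Gx. ring.
    - rewrite Rmult_assoc, <- exp_plus. replace (k * S x + - (k * S x)) with 0 by ring. rewrite exp_0. ring. }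
  assert (Hh : forall x, Rabs x < r -> Rho x * (A - (A - v) * T x) = 1).
  { intros x Hx.
    assert (E : (fun y => / Rho y - (A - (A - v) * T y)) x = (fun y => / Rho y - (A - (A - v) * T y)) 0).
    { apply (const_zero (fun y => / Rho y - (A - (A - v) * T y)) r); [| exact Hx].
      intros y Hy. destruct (HD y Hy) as [HS [HTd [HRd HRp]]].
      evar (d : R). replace 0 with d.
      + unfold d. auto_derive.
        * solve_ex.
        * dsub HRd. dsub HTd. reflexivity.
      + unfold d. field. lra. }
    simpl in E. assert (HRx : 0 < Rho x) by (apply HD; exact Hx).
    assert (HR00 : Rho 0 <> 0) by (intros Z; rewrite Z in HR0; lra).
    assert (E0 : / Rho 0 - (A - (A - v) * T 0) = 0).
    { apply (Rmult_eq_reg_l (Rho 0)); [| exact HR00]. rewrite Rmult_minus_distr_l, HR0. field. exact HR00. }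
    rewrite E0 in E. assert (Hq : A - (A - v) * T x = / Rho x) by lra. rewrite Hq. field. lra. }
  split; [| split; [apply Tt; exact Ht| apply Hh; exact Ht]].
  assert (E : (fun y => Ff k A (S y) v - y) t = (fun y => Ff k A (S y) v - y) 0).
  { apply (const_zero (fun y => Ff k A (S y) v - y) r); [| exact Ht].
    intros y Hy. destruct (HD y Hy) as [HS [HTd [HRd HRp]]].
    evar (d : R). replace 0 with d.
    + unfold d, Ff. auto_derive.
      * solve_ex.
      * dsub HS. reflexivity.
    + unfold d. pose proof (Hh y Hy) as Hy'. rewrite (Tt y Hy) in Hy'. field_simplify; [| lra].
      apply (Rmult_eq_reg_l k); [| lra]. rewrite Rmult_0_r.
      replace 0 with (k * (Rho y * (A - (A - v) * exp (- (k * S y))) - 1)) by (rewrite Hy'; ring).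
      field. lra. }
  simpl in E. lra.
Qed.

Lemma id_w (k A B0 : R) (s t Rho : R -> R) r : 0 < k ->
  (forall w, Rabs w < r -> is_derive s w (- (1 - t w) * Rho w / k) /\
        is_derive t w (t w * (1 - t w) * Rho w) /\
        is_derive Rho w (- Rho w ^ 2 * t w + (B0 - w) * Rho w ^ 2 * (t w * (1 - t w) * Rho w)) /\ 0 < Rho w) ->
  t 0 = exp (- (k * s 0)) -> Rho 0 * (A - B0 * t 0) = 1 ->
  forall w, Rabs w < r ->
  Ff k A (s w) (A - B0 + w) = Ff k A (s 0) (A - B0) /\ t w = exp (- (k * s w)) /\
  Rho w * (A - (B0 - w) * t w) = 1.
Proof.
  intros Hk HD HT0 HR0 w Hw.
  assert (G : forall x, Rabs x < r -> t x * exp (k * s x) = 1).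
  { intros x Hx. rewrite (const_zero (fun y => t y * exp (k * s y)) r).
    - rewrite HT0, <- exp_plus. replace (- (k * s 0) + k * s 0) with 0 by ring. apply exp_0.
    - intros y Hy. destruct (HD y Hy) as [HS [HTd [HRd HRp]]].
      evar (d : R). replace 0 with d.
      + unfold d. auto_derive.
        * solve_ex.
        * dsub HTd. dsub HS. reflexivity.
      + unfold d. field. lra.
    - exact Hx. }
  assert (Tt : forall x, Rabs x < r -> t x = exp (- (k * s x))).
  { intros x Hx. pose proof (G x Hx) as Gx.
    replace (t x) with (t x * exp (k * s x) * exp (- (k * s x))).
    - rewrite Gx. ring.
    - rewrite Rmult_assoc, <- exp_plus. replace (k * s x + - (k * s x)) with 0 by ring. rewrite exp_0. ring. }
  assert (Hh : forall x, Rabs x < r -> Rho x * (A - (B0 - x) * t x) = 1).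
  { intros x Hx.
    assert (E : (fun y => / Rho y - (A - (B0 - y) * t y)) x = (fun y => / Rho y - (A - (B0 - y) * t y)) 0).
    { apply (const_zero (fun y => / Rho y - (A - (B0 - y) * t y)) r); [| exact Hx].
      intros y Hy. destruct (HD y Hy) as [HS [HTd [HRd HRp]]].
      evar (d : R). replace 0 with d.
      + unfold d. auto_derive.
        * solve_ex.
        * dsub HRd. dsub HTd. reflexivity.
      + unfold d. field. lra. }
    simpl in E. assert (HRx : 0 < Rho x) by (apply HD; exact Hx).
    assert (HR00 : Rho 0 <> 0) by (intros Z; rewrite Z in HR0; lra).
    assert (E0 : / Rho 0 - (A - (B0 - 0) * t 0) = 0).
    { apply (Rmult_eq_reg_l (Rho 0)); [| exact HR00]. rewrite Rmult_minus_distr_l.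
      replace (B0 - 0) with B0 by ring. rewrite HR0. field. exact HR00. }
    rewrite E0 in E. assert (Hq : A - (B0 - x) * t x = / Rho x) by lra. rewrite Hq. field. lra. }
  split; [| split; [apply Tt; exact Hw| apply Hh; exact Hw]].
  assert (E : (fun y => Ff k A (s y) (A - B0 + y)) w = (fun y => Ff k A (s y) (A - B0 + y)) 0).
  { apply (const_zero (fun y => Ff k A (s y) (A - B0 + y)) r); [| exact Hw].
    intros y Hy. destruct (HD y Hy) as [HS [HTd [HRd HRp]]].
    evar (d : R). replace 0 with d.
    + unfold d, Ff. auto_derive.
      * solve_ex.
      * dsub HS. reflexivity.
    + unfold d. pose proof (Hh y Hy) as Hy'. rewrite (Tt y Hy) in Hy'.
      rewrite (Tt y Hy).
      apply (Rmult_eq_reg_l k); [| lra]. rewrite Rmult_0_r.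
      set (e := exp (- (k * s y))) in *.
      replace (A - (A - B0 + y)) with (B0 - y) by ring.
      transitivity ((1 - e) * (1 - Rho y * (A - (B0 - y) * e))).
      * field. lra.
      * rewrite Hy'. ring. }
  simpl in E. replace (A - B0 + 0) with (A - B0) in E by ring. exact E.
Qed.

Lemma exp_lt_aux t : 0 < t -> 0 < 1 - exp (- t) < t.
Proof.
  intros Ht. split.
  - assert (exp (- t) < 1). { rewrite <- exp_0. apply exp_increasing. lra. } lra.
  - pose proof (exp_ineq1 (- t) ltac:(lra)). lra.
Qed.

Lemma Ff_0 k A z : Ff k A 0 z = 0.
Proof. unfold Ff. replace (- (k * 0)) with 0 by ring. rewrite exp_0. unfold Rdiv. ring. Qed.

Definition phi (k x : R) := (1 - exp (- (k * x))) / k.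

Lemma Ff_phi k A x z : 0 < k -> Ff k A x z = A * (x - phi k x) + z * phi k x.
Proof. intros Hk. unfold Ff, phi. field. lra. Qed.

Lemma phi_bounds k x : 0 < k -> 0 < x -> 0 < phi k x < x /\ phi k x < / k.
Proof.
  intros Hk Hx. unfold phi. pose proof (exp_lt_aux (k * x) ltac:(nra)) as [H1 H2].
  pose proof (exp_pos (- (k * x))).
  split; [split|].
  - apply Rdiv_lt_0_compat; lra.
  - apply (Rmult_lt_reg_l k); [lra|]. field_simplify; lra.
  - apply (Rmult_lt_reg_l k); [lra|]. field_simplify; lra.
Qed.

Lemma phi_incr k x1 x2 : 0 < k -> x1 < x2 -> phi k x1 < phi k x2.
Proof.
  intros Hk H. unfold phi. unfold Rdiv. apply Rmult_lt_compat_r; [apply Rinv_0_lt_compat; lra|].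
  assert (exp (- (k * x2)) < exp (- (k * x1))) by (apply exp_increasing; nra). lra.
Qed.

Lemma Ff_incr k A z x1 x2 : 0 < k -> 0 < A -> 0 <= z -> 0 <= x1 -> x1 < x2 -> Ff k A x1 z < Ff k A x2 z.
Proof.
  intros Hk HA Hz H1 H12. unfold Ff.
  set (d := x2 - x1).
  assert (Hd : 0 < d) by (unfold d; lra).
  assert (E : exp (- (k * x1)) - exp (- (k * x2)) = exp (- (k * x1)) * (1 - exp (- (k * d)))).
  { unfold d. rewrite Rmult_minus_distr_l, <- exp_plus. f_equal. ring_simplify. f_equal. f_equal. ring. }
  pose proof (exp_lt_aux (k * d) ltac:(nra)) as [Q1 Q2].
  assert (E1 : exp (- (k * x1)) <= 1).
  { destruct (Req_dec x1 0) as [->|Hne].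
    - replace (- (k * 0)) with 0 by ring. rewrite exp_0. lra.
    - left. rewrite <- exp_0. apply exp_increasing. nra. }
  pose proof (exp_pos (- (k * x1))).
  set (X := (exp (- (k * x1)) - exp (- (k * x2))) / k).
  assert (HX : 0 < X < d).
  { unfold X. rewrite E. split.
    - apply Rdiv_lt_0_compat; [apply Rmult_lt_0_compat|]; lra.
    - apply (Rmult_lt_reg_l k); [lra|]. field_simplify; [|lra]. nra. }
  assert (Eq : A * x2 - (A - z) * (1 - exp (- (k * x2))) / k - (A * x1 - (A - z) * (1 - exp (- (k * x1))) / k)
            = A * d - (A - z) * X) by (unfold X, d; field; lra).
  destruct (Rle_lt_dec (A - z) 0).
  - assert ((A - z) * X <= 0) by nra. nra.
  - assert ((A - z) * X < (A - z) * d) by nra. nra.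
Qed.

Lemma Ff_cont k A z : 0 < k -> continuity (fun x => Ff k A x z).
Proof.
  intros Hk x. apply continuity_pt_filterlim. apply (@ex_derive_continuous R_AbsRing R_NormedModule (fun x => Ff k A x z) x).
  unfold Ff. auto_derive. solve_ex.
Qed.

Lemma Ff_root_ex k A y z : 0 < k -> 0 < A -> 0 < y -> 0 <= z -> exists x, 0 < x /\ Ff k A x z = y.
Proof.
  intros Hk HA Hy Hz.
  set (b := y / A + / k + 1).
  assert (Hb : 0 < b) by (unfold b; assert (0 < y / A) by (apply Rdiv_lt_0_compat; lra);
                          assert (0 < / k) by (apply Rinv_0_lt_compat; lra); lra).
  assert (Hfb : y < Ff k A b z).
  { rewrite Ff_phi by lra. destruct (phi_bounds k b Hk Hb) as [[P1 P2] P3].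
    assert (A * (b - phi k b) > A * (y / A + 1)).
    { apply Rmult_gt_compat_l; [lra|]. unfold b in *. lra. }
    assert (A * (y / A + 1) = y + A) by (field; lra). nra. }
  destruct (IVT (fun x => Ff k A x z - y) 0 b) as [x [Hx Ex]].
  - apply continuity_minus; [apply Ff_cont; exact Hk| apply continuity_const; intros ? ?; reflexivity].
  - exact Hb.
  - simpl. rewrite Ff_0. lra.
  - simpl. lra.
  - exists x. simpl in Ex. split; [| lra].
    destruct (Req_dec x 0) as [->|]; [rewrite Ff_0 in Ex; lra| lra].
Qed.

Lemma Ff_inj k A z x1 x2 : 0 < k -> 0 < A -> 0 <= z -> 0 <= x1 -> 0 <= x2 -> Ff k A x1 z = Ff k A x2 z -> x1 = x2.
Proof.
  intros Hk HA Hz H1 H2 E. destruct (Rtotal_order x1 x2) as [L|[Eq|L]]; auto.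
  - pose proof (Ff_incr k A z x1 x2 Hk HA Hz H1 L). lra.
  - pose proof (Ff_incr k A z x2 x1 Hk HA Hz H2 L). lra.
Qed.

Definition Xf (k A y z : R) : R := epsilon (inhabits 0) (fun x => 0 < x /\ Ff k A x z = y).

Lemma Xf_spec k A y z : 0 < k -> 0 < A -> 0 < y -> 0 <= z -> 0 < Xf k A y z /\ Ff k A (Xf k A y z) z = y.
Proof. intros. unfold Xf. apply epsilon_spec. apply Ff_root_ex; auto. Qed.

Lemma Xf_unique k A y z x : 0 < k -> 0 < A -> 0 <= z -> 0 < x -> Ff k A x z = y -> Xf k A y z = x.
Proof.
  intros Hk HA Hz Hx E.
  assert (Hs : 0 < Xf k A y z /\ Ff k A (Xf k A y z) z = y).
  { unfold Xf. apply epsilon_spec. exists x. auto. }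
  destruct Hs as [H1 H2]. apply (Ff_inj k A z); try lra.
Qed.

Lemma pos_persist (f : R -> R) r : (forall x, Rabs x < r -> continuity_pt f x) -> 0 < f 0 ->
  (forall x, Rabs x < r -> f x <> 0) -> forall x, Rabs x < r -> 0 < f x.
Proof.
  intros Hc H0 Hn x Hx. destruct (Rlt_dec 0 (f x)) as [|Hle]; [assumption| exfalso].
  assert (Hneg : f x < 0) by (pose proof (Hn x Hx); lra).
  destruct (Rtotal_order x 0) as [Hlt|[->|Hgt]].
  - destruct (Ranalysis5.IVT_interv f x 0) as [z [Hz Ez]]; try assumption.
    + intros a Ha. apply Hc. unfold Rabs in *. destruct (Rcase_abs a); destruct (Rcase_abs x); lra.
    + apply (Hn z); [unfold Rabs in *; destruct (Rcase_abs z); destruct (Rcase_abs x); lra| exact Ez].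
  - lra.
  - destruct (Ranalysis5.IVT_interv (fun y => - f y) 0 x) as [z [Hz Ez]]; try lra.
    + intros a Ha. apply continuity_pt_opp. apply Hc. unfold Rabs in *. destruct (Rcase_abs a); destruct (Rcase_abs x); lra.
    + apply (Hn z); [unfold Rabs in *; destruct (Rcase_abs z); destruct (Rcase_abs x); lra| lra].
Qed.

Lemma deriv_PS a d x : RL a x -> (forall n, a (S n) = d n / INR (S n)) -> is_derive (PSeries a) x (PSeries d x).
Proof.
  intros HR Hrec. replace (PSeries d x) with (PSeries (PS_derive a) x).
  - apply is_derive_PSeries. exact HR.
  - unfold PSeries, PS_derive. apply Series_ext. intros n. rewrite Hrec. field.
    apply not_0_INR. lia.
Qed.

Lemma bup_all_geom a C M : 0 <= M -> (forall n, bup a C M n) -> forall n, Rabs (a n) <= C * M ^ n.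
Proof.
  intros HM H n. assert (HC0 := bup_C_nonneg _ _ _ _ (H 0%nat)).
  specialize (H n n (le_n n)). pose proof (om_le1 n). pose proof (om_pos n).
  assert (HC : 0 <= C * M ^ n) by (apply Rmult_le_pos; [lra|apply pow_le; lra]).
  nra.
Qed.

Ltac gd := repeat (first [assumption | apply Gd_mul; [lra| |] | apply Gd_add | apply Gd_sc | apply Gd_X; [lra|]]).

Lemma w_part k A B0 x0 al N rad :
  0 < k -> 0 < A -> 0 < x0 -> 0 < A - B0 * exp (- (k * x0)) ->
  1 <= al -> Rabs x0 <= al -> Rabs (exp (- (k * x0))) <= al -> Rabs (/ (A - B0 * exp (- (k * x0)))) <= al ->
  1 <= N -> 4 * cSw k al <= al * N -> 4 * cTw al <= al * N -> 4 * cRw B0 al <= al * N ->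
  0 < rad -> rad * N <= / 2 -> rad * (4 * al * N) <= / (A - B0 * exp (- (k * x0))) ->
  0 < Ff k A x0 (A - B0) ->
  let f := wseq k B0 x0 (exp (- (k * x0))) (/ (A - B0 * exp (- (k * x0)))) in
  forall w, Rabs w < rad ->
  Ff k A (PSeries (g1 f) w) (A - B0 + w) = Ff k A x0 (A - B0) /\
  PSeries (g2 f) w = exp (- (k * PSeries (g1 f) w)) /\
  PSeries (g3 f) w * (A - (B0 - w) * PSeries (g2 f) w) = 1 /\
  / (A - B0 * exp (- (k * x0))) / 2 <= PSeries (g3 f) w /\ 0 < PSeries (g1 f) w.
Proof.
  intros Hk HA Hx0 HL Hal Ha1 Ha2 Ha3 HN H1 H2 H3 Hr HrN HrL Hp f.
  set (L := A - B0 * exp (- (k * x0))) in *.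
  set (t0 := exp (- (k * x0))) in *.
  pose proof (w_bounds k B0 x0 t0 (/ L) al N Hk Hal Ha1 Ha2 Ha3 HN H1 H2 H3) as WB. fold f in WB.
  assert (GS : Gd (g1 f) N) by (exists al; intros n; apply WB).
  assert (GT : Gd (g2 f) N) by (exists al; intros n; apply WB).
  assert (GR : Gd (g3 f) N) by (exists al; intros n; apply WB).
  assert (HN0 : 0 < N) by lra.
  assert (Hw : forall w, Rabs w < rad -> Rabs w < / N /\ N * Rabs w <= / 2).
  { intros w Hw. split.
    - apply Rlt_le_trans with rad; [exact Hw|].
      apply (Rmult_le_reg_l N); [lra|]. rewrite Rinv_r by lra. lra.
    - assert (N * Rabs w <= N * rad) by (apply Rmult_le_compat_l; lra). lra. }
  set (s := PSeries (g1 f)). set (t := PSeries (g2 f)). set (rho := PSeries (g3 f)).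
  assert (Hrho : forall w, Rabs w < rad -> / L / 2 <= rho w).
  { intros w Hw'. destruct (Hw w Hw') as [_ Hw2].
    pose proof (PSeries_diff_bound (g3 f) al N w (bup_all_geom (g3 f) al N ltac:(lra) (fun n => proj2 (proj2 (WB n)))) ltac:(lra) Hw2) as D.
    change (g3 f 0%nat) with (/ L) in D. fold rho in D.
    assert (2 * al * N * Rabs w <= / L / 2).
    { assert (Rabs w * (4 * al * N) <= rad * (4 * al * N)).
      { apply Rmult_le_compat_r; [nra| lra]. }
      lra. }
    assert (/ L - rho w <= Rabs (rho w - / L)) by (rewrite Rabs_minus_sym; apply RRle_abs). lra. }
  assert (HLi : 0 < / L) by (apply Rinv_0_lt_compat; lra).
  assert (HD : forall w, Rabs w < rad -> is_derive s w (- (1 - t w) * rho w / k) /\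
        is_derive t w (t w * (1 - t w) * rho w) /\
        is_derive rho w (- rho w ^ 2 * t w + (B0 - w) * rho w ^ 2 * (t w * (1 - t w) * rho w)) /\ 0 < rho w).
  { intros w Hw'. destruct (Hw w Hw') as [Hw1 Hw2].
    assert (RL1 : forall a, Gd a N -> RL a w) by (intros a Ga; exact (Gd_RL a N w HN0 Ga Hw1)).
    assert (Et : PSeries (dTw (g2 f) (g3 f)) w = t w * (1 - t w) * rho w).
    { unfold dTw. rewrite PSeries_padd by (apply RL1; gd). rewrite PSeries_psc.
      rewrite !PSeries_pmul by (apply RL1; gd). unfold t, rho. ring. }
    split; [|split; [|split]].
    - replace (- (1 - t w) * rho w / k) with (PSeries (dSw k (g2 f) (g3 f)) w).
      + unfold s. apply deriv_PS; [apply RL1; gd| intros n; apply wS_S].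
      + unfold dSw. rewrite PSeries_psc, PSeries_padd by (apply RL1; gd). rewrite PSeries_psc.
        rewrite PSeries_pmul by (apply RL1; gd). unfold t, rho. field. lra.
    - rewrite <- Et. unfold t. apply deriv_PS; [apply RL1; gd| intros n; apply wT_S].
    - replace (- rho w ^ 2 * t w + (B0 - w) * rho w ^ 2 * (t w * (1 - t w) * rho w)) with (PSeries (dRw B0 (g2 f) (g3 f)) w).
      + unfold rho. apply deriv_PS; [apply RL1; gd| intros n; apply wR_S].
      + unfold dRw, Qw.
        rewrite PSeries_padd by (apply RL1; unfold dTw; gd).
        rewrite PSeries_padd by (apply RL1; unfold dTw; gd).
        rewrite !PSeries_psc, PSeries_pX.
        rewrite !PSeries_pmul by (apply RL1; unfold dTw; gd).
        rewrite Et. unfold t, rho. ring.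
    - pose proof (Hrho w Hw'). lra. }
  assert (HT0 : t 0 = exp (- (k * s 0))).
  { unfold t, s. rewrite !PSeries_0. reflexivity. }
  assert (HR0 : rho 0 * (A - B0 * t 0) = 1).
  { unfold t, rho. rewrite !PSeries_0. change (g3 f 0%nat) with (/ L). change (g2 f 0%nat) with t0.
    fold L. field. lra. }
  assert (ID := id_w k A B0 s t rho rad Hk HD HT0 HR0).
  assert (Hs0 : s 0 = x0) by (unfold s; rewrite PSeries_0; reflexivity).
  intros w Hw'.
  destruct (ID w Hw') as [E1 [E2 E3]].
  rewrite Hs0 in E1.
  split; [exact E1|]. split; [exact E2|]. split; [exact E3|]. split; [apply Hrho; exact Hw'|].
  apply (pos_persist s rad); [| rewrite Hs0; exact Hx0| | exact Hw'].
  - intros y Hy. apply continuity_pt_filterlim.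
    apply (@ex_derive_continuous R_AbsRing R_NormedModule s y). eexists. exact (proj1 (HD y Hy)).
  - intros y Hy Z. destruct (ID y Hy) as [F1 _]. rewrite Hs0, Z, Ff_0 in F1. lra.
Qed.


Lemma PSeries_sc' c a x : PSeries (fun i => c * a i) x = c * PSeries a x.
Proof. exact (PSeries_psc c a x). Qed.

Lemma PSeries_sc2 c1 c2 a x : PSeries (fun i => c1 * (c2 * a i)) x = c1 * c2 * PSeries a x.
Proof. unfold PSeries. rewrite <- Series_scal_l. apply Series_ext. intros n. ring. Qed.

Lemma tau_part k A B0 S0 T0 R0 al M N w rad p rl :
  0 < k -> 0 < A -> 1 <= al -> 1 <= M -> 1 <= N ->
  (forall n, bup S0 al N n /\ bup T0 al N n /\ bup R0 al N n) ->
  4 * al <= al * M -> 4 * cT2 k al <= al * M -> 4 * cR2 k B0 al <= al * M ->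
  N * Rabs w <= / 2 -> Rabs w < / N ->
  Ff k A (PSeries S0 w) (A - B0 + w) = p ->
  PSeries T0 w = exp (- (k * PSeries S0 w)) ->
  PSeries R0 w * (A - (B0 - w) * PSeries T0 w) = 1 ->
  0 < rl -> rl <= PSeries R0 w -> 0 < PSeries S0 w -> 0 < p ->
  0 < rad -> rad * M <= / 2 -> rad * (4 * al * M) <= rl / 2 -> rad <= p ->
  let f := tseq k B0 S0 T0 R0 in
  forall tau, Rabs tau < rad ->
  Ff k A (PSeries (ev (g1 f) w) tau) (A - B0 + w) = p + tau /\ 0 < PSeries (ev (g1 f) w) tau.
Proof.
  intros Hk HA Hal HM HN H0 H1 H2 H3 Hw2 Hw1 Fw Tw Rw Hrl Hrlw HSw Hp Hr HrM Hrr Hrp f.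
  pose proof (tau_rec k B0 S0 T0 R0 al M N w Hk Hal HM HN H0 H1 H2 H3 Hw1) as TR. fold f in TR.
  pose proof (t_bounds k B0 S0 T0 R0 al M N Hk Hal HM HN H0 H1 H2 H3) as TB. fold f in TB.
  assert (HM0 : 0 < M) by lra.
  assert (EVB : forall (a : nat -> nat -> R), (forall i, bup2 a al M N i) -> forall n, bup (ev a w) (2 * al) M n).
  { intros a Ha n l Hl. unfold ev.
    assert (Hrow : forall j, Rabs (a l j) <= (al * M ^ l * om l) * N ^ j).
    { intros j. specialize (Ha l l (le_n l) j). pose proof (om_le1 j). pose proof (om_pos j).
      assert (0 <= al * M ^ l * om l) by (pose proof (om_pos l); apply Rmult_le_pos; [apply Rmult_le_pos; [lra| apply pow_le; lra]| lra]).
      assert (0 <= N ^ j) by (apply pow_le; lra). 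
      eapply Rle_trans; [exact Ha|].
      assert (0 <= al * M ^ l * om l * N ^ j) by (apply Rmult_le_pos; assumption).
      replace (al * M ^ l * om l * (N ^ j * om j)) with ((al * M ^ l * om l * N ^ j) * om j) by ring.
      nra. }
    pose proof (PSeries_abs_bound (a l) _ N w Hrow ltac:(lra) Hw2). lra. }
  assert (GS : Gd (ev (g1 f) w) M) by (exists (2 * al); apply EVB; intros i; apply TB).
  assert (GT : Gd (ev (g2 f) w) M) by (exists (2 * al); apply EVB; intros i; apply TB).
  assert (GR : Gd (ev (g3 f) w) M) by (exists (2 * al); apply EVB; intros i; apply TB).
  set (aS := ev (g1 f) w) in *. set (aT := ev (g2 f) w) in *. set (aR := ev (g3 f) w) in *.
  assert (Ht : forall tau, Rabs tau < rad -> Rabs tau < / M /\ M * Rabs tau <= / 2).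
  { intros tau Htau. split.
    - apply Rlt_le_trans with rad; [exact Htau|].
      apply (Rmult_le_reg_l M); [lra|]. rewrite Rinv_r by lra. lra.
    - assert (M * Rabs tau <= M * rad) by (apply Rmult_le_compat_l; lra). lra. }
  assert (aR0 : aR 0%nat = PSeries R0 w) by reflexivity.
  assert (aT0 : aT 0%nat = PSeries T0 w) by reflexivity.
  assert (aS0 : aS 0%nat = PSeries S0 w) by reflexivity.
  set (Sf := PSeries aS). set (Tf := PSeries aT). set (Rf := PSeries aR).
  assert (Hrho : forall tau, Rabs tau < rad -> rl / 2 <= Rf tau).
  { intros tau Htau. destruct (Ht tau Htau) as [_ Ht2].
    pose proof (PSeries_diff_bound aR (2 * al) M tau (bup_all_geom aR (2 * al) M ltac:(lra) (EVB _ (fun i => proj2 (proj2 (TB i))))) ltac:(lra) Ht2) as D.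
    fold Rf in D. rewrite aR0 in D.
    assert (2 * (2 * al) * M * Rabs tau <= rl / 2).
    { assert (Rabs tau * (4 * al * M) <= rad * (4 * al * M)) by (apply Rmult_le_compat_r; [nra| lra]).
      lra. }
    assert (PSeries R0 w - Rf tau <= Rabs (Rf tau - PSeries R0 w)) by (rewrite Rabs_minus_sym; apply RRle_abs).
    lra. }
  set (v := A - B0 + w).
  assert (HD : forall tau, Rabs tau < rad -> is_derive Sf tau (Rf tau) /\ is_derive Tf tau (- k * Tf tau * Rf tau) /\
        is_derive Rf tau (- k * (A - v) * Tf tau * Rf tau ^ 3) /\ 0 < Rf tau).
  { intros tau Htau. destruct (Ht tau Htau) as [Ht1 Ht2].
    assert (RL1 : forall a, Gd a M -> RL a tau) by (intros a Ga; exact (Gd_RL a M tau HM0 Ga Ht1)).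
    split; [|split; [|split]].
    - unfold Sf, Rf. apply deriv_PS; [apply RL1; gd| intros n; apply TR].
    - replace (- k * Tf tau * Rf tau) with (PSeries (fun i => - k * PS_mult aT aR i) tau).
      + unfold Tf. apply deriv_PS; [apply RL1; gd| intros n; apply TR].
      + rewrite PSeries_sc', PSeries_pmul by (apply RL1; gd). unfold Tf, Rf. ring.
    - replace (- k * (A - v) * Tf tau * Rf tau ^ 3) with
        (PSeries (fun i => - k * ((B0 - w) * PS_mult (PS_mult (PS_mult aT aR) aR) aR i)) tau).
      + unfold Rf. apply deriv_PS; [apply RL1; gd| intros n; apply TR].
      + rewrite PSeries_sc2. rewrite !PSeries_pmul by (apply RL1; gd). unfold Tf, Rf, v. ring.
    - pose proof (Hrho tau Htau). lra. }
  assert (HT0 : Tf 0 = exp (- (k * Sf 0))).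
  { unfold Tf, Sf. rewrite !PSeries_0. rewrite aT0, aS0. exact Tw. }
  assert (HR0 : Rf 0 * (A - (A - v) * Tf 0) = 1).
  { unfold Tf, Rf. rewrite !PSeries_0. rewrite aT0, aR0. unfold v.
    replace (A - (A - B0 + w)) with (B0 - w) by ring. exact Rw. }
  pose proof (id_tau k A v Sf Tf Rf rad Hk HD HT0 HR0) as ID.
  assert (HS0 : Sf 0 = PSeries S0 w) by (unfold Sf; rewrite PSeries_0; exact aS0).
  intros tau Htau.
  destruct (ID tau Htau) as [E1 _]. rewrite HS0 in E1. fold v in Fw. rewrite Fw in E1.
  split; [exact E1|].
  apply (pos_persist Sf rad); [| rewrite HS0; exact HSw| | exact Htau].
  - intros y Hy. apply continuity_pt_filterlim.
    apply (@ex_derive_continuous R_AbsRing R_NormedModule Sf y). eexists. exact (proj1 (HD y Hy)).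
  - intros y Hy Z. destruct (ID y Hy) as [F1 _]. rewrite HS0, Z, Ff_0, Fw in F1.
    assert (Rabs y < p) by lra. unfold Rabs in H. destruct (Rcase_abs y); lra.
Qed.

Lemma core k A p q : 0 < k -> 0 < A -> 0 < p -> 0 <= q ->
  exists (c : nat -> nat -> R) (al M N r : R), 0 < r /\ 1 <= al /\ 1 <= M /\ 1 <= N /\
    r * M <= / 2 /\ r * N <= / 2 /\ (forall i j, Rabs (c i j) <= al * M ^ i * N ^ j) /\
    forall tau w, Rabs tau < r -> Rabs w < r -> 0 <= q + w ->
      PSeries (fun i => PSeries (c i) w) tau = Xf k A (p + tau) (q + w).
Proof.
  intros Hk HA Hp Hq.
  destruct (Xf_spec k A p q Hk HA Hp Hq) as [Hx0 Fx0].
  set (x0 := Xf k A p q) in *.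
  set (B0 := A - q). set (t0 := exp (- (k * x0))).
  assert (Ht0 : 0 < t0 < 1).
  { unfold t0. split; [apply exp_pos|]. rewrite <- exp_0. apply exp_increasing. nra. }
  set (L := A - B0 * t0).
  assert (HL : 0 < L) by (unfold L, B0; nra).
  set (al := 1 + Rabs x0 + Rabs t0 + Rabs (/ L)).
  assert (Hal : 1 <= al) by (unfold al; pose proof (Rabs_pos x0); pose proof (Rabs_pos t0); pose proof (Rabs_pos (/ L)); lra).
  assert (Ha1 : Rabs x0 <= al) by (unfold al; pose proof (Rabs_pos t0); pose proof (Rabs_pos (/ L)); lra).
  assert (Ha2 : Rabs t0 <= al) by (unfold al; pose proof (Rabs_pos x0); pose proof (Rabs_pos (/ L)); lra).
  assert (Ha3 : Rabs (/ L) <= al) by (unfold al; pose proof (Rabs_pos x0); pose proof (Rabs_pos t0); lra).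
  assert (Hal0 : 0 <= al) by lra.
  assert (Ha2' : 0 <= al * al) by nra.
  assert (Ha3' : 0 <= al * al * al) by nra.
  assert (cS0 : 0 <= cSw k al).
  { unfold cSw. apply Rmult_le_pos; [left; apply Rinv_0_lt_compat; lra| nra]. }
  assert (cT0 : 0 <= cTw al) by (unfold cTw; nra).
  assert (cQ0 : 0 <= cQw al) by (unfold cQw; apply Rmult_le_pos; nra).
  assert (cR0 : 0 <= cRw B0 al).
  { unfold cRw. pose proof (Rabs_pos B0). assert (0 <= Rabs B0 * cQw al) by nra.
    assert (0 <= 8 * (8 * al * al) * al) by nra. lra. }
  set (N := 1 + 4 * (cSw k al + cTw al + cRw B0 al)).
  assert (HN : 1 <= N) by (unfold N; lra).
  assert (HNa : forall c, 0 <= c -> c <= cSw k al + cTw al + cRw B0 al -> 4 * c <= al * N).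
  { intros c Hc Hc'. assert (N <= al * N) by nra. unfold N in *. lra. }
  assert (c4p : 0 <= c4 al) by (unfold c4; repeat apply Rmult_le_pos; nra).
  assert (cT20 : 0 <= cT2 k al) by (unfold cT2; apply Rmult_le_pos; nra).
  assert (cR20 : 0 <= cR2 k B0 al).
  { unfold cR2. apply Rmult_le_pos; [lra|]. apply Rmult_le_pos; [pose proof (Rabs_pos B0); lra| exact c4p]. }
  set (M := 4 + 4 * (cT2 k al + cR2 k B0 al)).
  assert (HM : 1 <= M) by (unfold M; lra).
  assert (HMa : forall c, 0 <= c -> c <= 1 + cT2 k al + cR2 k B0 al -> 4 * c <= al * M).
  { intros c Hc Hc'. assert (M <= al * M) by nra. unfold M in *. lra. }
  set (f := wseq k B0 x0 t0 (/ L)).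
  set (S0 := g1 f). set (T0 := g2 f). set (R0 := g3 f).
  pose proof (w_bounds k B0 x0 t0 (/ L) al N Hk Hal Ha1 Ha2 Ha3 HN
               (HNa _ cS0 ltac:(lra)) (HNa _ cT0 ltac:(lra)) (HNa _ cR0 ltac:(lra))) as WB.
  fold f in WB.
  set (c := g1 (tseq k B0 S0 T0 R0)).
  assert (H1 : 4 * al <= al * M).
  { assert (4 <= M) by (unfold M; lra). nra. }
  assert (H2 : 4 * cT2 k al <= al * M) by (apply HMa; lra).
  assert (H3 : 4 * cR2 k B0 al <= al * M) by (apply HMa; lra).
  pose proof (t_bounds k B0 S0 T0 R0 al M N Hk Hal HM HN WB H1 H2 H3) as TB.
  assert (HLi : 0 < / L) by (apply Rinv_0_lt_compat; lra).
  set (r := Rmin (Rmin (/ (2 * N)) (/ (2 * M))) (Rmin (/ L / (16 * al * M * N)) p)).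
  assert (Hr1 : r <= / (2 * N)) by (unfold r; apply Rle_trans with (Rmin (/ (2 * N)) (/ (2 * M))); apply Rmin_l).
  assert (Hr2 : r <= / (2 * M)) by (unfold r; apply Rle_trans with (Rmin (/ (2 * N)) (/ (2 * M))); [apply Rmin_l| apply Rmin_r]).
  assert (Hr3 : r <= / L / (16 * al * M * N)) by (unfold r; apply Rle_trans with (Rmin (/ L / (16 * al * M * N)) p); [apply Rmin_r| apply Rmin_l]).
  assert (Hr4 : r <= p) by (unfold r; apply Rle_trans with (Rmin (/ L / (16 * al * M * N)) p); apply Rmin_r).
  assert (HMN : 0 < 16 * al * M * N) by (repeat apply Rmult_lt_0_compat; lra).
  assert (Hr : 0 < r).
  { unfold r. repeat apply Rmin_glb_lt; try lra.
    - apply Rinv_0_lt_compat; lra. - apply Rinv_0_lt_compat; lra.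
    - apply Rdiv_lt_0_compat; lra. }
  assert (HrN : r * N <= / 2).
  { apply Rle_trans with (/ (2 * N) * N); [apply Rmult_le_compat_r; lra| right; field; lra]. }
  assert (HrM : r * M <= / 2).
  { apply Rle_trans with (/ (2 * M) * M); [apply Rmult_le_compat_r; lra| right; field; lra]. }
  assert (HrL : r * (16 * al * M * N) <= / L).
  { apply Rle_trans with (/ L / (16 * al * M * N) * (16 * al * M * N)); [apply Rmult_le_compat_r; lra| right; field; lra]. }
  assert (HrL1 : r * (4 * al * N) <= / L).
  { assert (r * (4 * al * N) <= r * (16 * al * M * N)).
    { apply Rmult_le_compat_l; [lra|]. assert (0 <= al * N) by nra. nra. }
    lra. }
  assert (HrL2 : r * (4 * al * M) <= / L / 2 / 2).
  { assert (r * (4 * al * M) * 4 <= r * (16 * al * M * N)).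
    { replace (r * (4 * al * M) * 4) with (r * (16 * al * M)) by ring.
      apply Rmult_le_compat_l; [lra|]. assert (0 <= al * M) by nra. nra. }
    lra. }
  assert (Fx0' : 0 < Ff k A x0 (A - B0)) by (replace (A - B0) with q by (unfold B0; ring); lra).
  exists c, al, M, N, r.
  split; [exact Hr|]. split; [exact Hal|]. split; [exact HM|]. split; [exact HN|].
  split; [exact HrM|]. split; [exact HrN|]. split.
  - intros i j. destruct (TB i) as [B _]. specialize (B i (le_n i) j).
    pose proof (om_le1 i). pose proof (om_le1 j). pose proof (om_pos i). pose proof (om_pos j).
    assert (0 <= M ^ i) by (apply pow_le; lra). assert (0 <= N ^ j) by (apply pow_le; lra).
    eapply Rle_trans; [exact B|].
    replace (al * M ^ i * om i * (N ^ j * om j)) with ((al * M ^ i * N ^ j) * (om i * om j)) by ring.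
    assert (0 <= al * M ^ i * N ^ j) by (repeat apply Rmult_le_pos; lra).
    assert (om i * om j <= 1) by nra. nra.
  - intros tau w Htau Hw Hqw.
    assert (HwN : N * Rabs w <= / 2).
    { assert (N * Rabs w <= N * r) by (apply Rmult_le_compat_l; lra). lra. }
    assert (HwN1 : Rabs w < / N).
    { apply Rlt_le_trans with r; [exact Hw|]. apply Rle_trans with (/ (2 * N)); [exact Hr1|].
      apply Rinv_le_contravar; lra. }
    pose proof (w_part k A B0 x0 al N r Hk HA Hx0 HL Hal Ha1 Ha2 Ha3 HN
               (HNa _ cS0 ltac:(lra)) (HNa _ cT0 ltac:(lra)) (HNa _ cR0 ltac:(lra)) Hr HrN HrL1 Fx0' w Hw) as WP.
    fold t0 L f S0 T0 R0 in WP.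
    destruct WP as [W1 [W2 [W3 [W4 W5]]]].
    replace (Ff k A x0 (A - B0)) with p in W1 by (replace (A - B0) with q by (unfold B0; ring); lra).
    pose proof (tau_part k A B0 S0 T0 R0 al M N w r p (/ L / 2) Hk HA Hal HM HN WB H1 H2 H3 HwN HwN1
                 W1 W2 W3 ltac:(lra) W4 W5 Hp Hr HrM HrL2 Hr4 tau Htau) as TP.
    destruct TP as [T1 T2].
    symmetry. apply Xf_unique; try lra.
    + exact T2.
    + replace (q + w) with (A - B0 + w) by (unfold B0; ring). exact T1.
Qed.

Lemma Series_nonneg b : (forall n, 0 <= b n) -> ex_series b -> 0 <= Series b.
Proof.
  intros H E. assert (Series (fun n => 0 * b n) <= Series b).
  { apply Series_le; [intros n; rewrite Rmult_0_l; split; [lra| apply H]| exact E]. }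
  rewrite Series_scal_l in H0. lra.
Qed.

Lemma geom_ex C q : 0 <= q -> q <= / 2 -> ex_series (fun n => C * q ^ n) /\ Series (fun n => C * q ^ n) = C / (1 - q).
Proof.
  intros H1 H2. assert (Hq : Rabs q < 1) by (rewrite Rabs_right; lra).
  pose proof (is_series_geom q Hq) as G.
  assert (G' : is_series (fun n => C * q ^ n) (C * / (1 - q))).
  { apply (is_series_scal_l C (fun n => q ^ n)). exact G. }
  split; [eexists; exact G'|]. rewrite (is_series_unique _ _ G'). reflexivity.
Qed.

Lemma double_bounds (c : nat -> nat -> R) C M N x y : (forall i j, Rabs (c i j) <= C * M ^ i * N ^ j) ->
  0 <= M -> 0 <= N -> M * Rabs x <= / 2 -> N * Rabs y <= / 2 ->
  (forall i, ex_series (fun j => Rabs (c i j) * Rabs x ^ i * Rabs y ^ j)) /\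
  ex_series (fun i => Series (fun j => Rabs (c i j) * Rabs x ^ i * Rabs y ^ j)).
Proof.
  intros Hc HM HN Hx Hy.
  assert (HC : 0 <= C) by (specialize (Hc 0%nat 0%nat); simpl in Hc; pose proof (Rabs_pos (c 0%nat 0%nat)); lra).
  assert (Hx0 : 0 <= M * Rabs x) by (apply Rmult_le_pos; [lra| apply Rabs_pos]).
  assert (Hy0 : 0 <= N * Rabs y) by (apply Rmult_le_pos; [lra| apply Rabs_pos]).
  assert (Hle : forall i j, 0 <= Rabs (c i j) * Rabs x ^ i * Rabs y ^ j <= (C * (M * Rabs x) ^ i) * (N * Rabs y) ^ j).
  { intros i j. assert (0 <= Rabs x ^ i) by (apply pow_le, Rabs_pos). assert (0 <= Rabs y ^ j) by (apply pow_le, Rabs_pos).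
    pose proof (Rabs_pos (c i j)). split; [apply Rmult_le_pos; [apply Rmult_le_pos|]; lra|].
    rewrite !Rpow_mult_distr.
    replace (C * (M ^ i * Rabs x ^ i) * (N ^ j * Rabs y ^ j)) with ((C * M ^ i * N ^ j) * (Rabs x ^ i * Rabs y ^ j)) by ring.
    rewrite Rmult_assoc. apply Rmult_le_compat_r; [apply Rmult_le_pos; lra| apply Hc]. }
  assert (Inner : forall i, ex_series (fun j => Rabs (c i j) * Rabs x ^ i * Rabs y ^ j) /\
                 Series (fun j => Rabs (c i j) * Rabs x ^ i * Rabs y ^ j) <= 2 * C * (M * Rabs x) ^ i).
  { intros i. destruct (geom_ex (C * (M * Rabs x) ^ i) (N * Rabs y) Hy0 Hy) as [G1 G2].
    assert (E : ex_series (fun j => Rabs (c i j) * Rabs x ^ i * Rabs y ^ j)).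
    { apply (@ex_series_le R_AbsRing R_CompleteNormedModule _ (fun j => C * (M * Rabs x) ^ i * (N * Rabs y) ^ j)); [| exact G1].
      intros j. unfold norm; simpl. rewrite Rabs_right by (apply Rle_ge; apply Hle). apply Hle. }
    split; [exact E|].
    eapply Rle_trans; [apply Series_le; [apply Hle| exact G1]|]. rewrite G2.
    assert (0 <= C * (M * Rabs x) ^ i) by (apply Rmult_le_pos; [lra| apply pow_le; lra]).
    assert (/ (1 - N * Rabs y) <= 2) by (replace 2 with (/ (/ 2)) by field; apply Rinv_le_contravar; lra).
    unfold Rdiv. nra. }
  split; [intros i; apply Inner|].
  destruct (geom_ex (2 * C) (M * Rabs x) Hx0 Hx) as [G1 _].
  apply (@ex_series_le R_AbsRing R_CompleteNormedModule _ (fun i => 2 * C * (M * Rabs x) ^ i)); [| exact G1].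
  intros i. unfold norm; simpl. destruct (Inner i) as [E B].
  rewrite Rabs_right; [exact B|]. apply Rle_ge. apply Series_nonneg; [| exact E].
  intros j. apply Hle.
Qed.

Lemma analytic2_Xf k A : 0 < k -> 0 < A ->
  analytic2_on (fun y0 z0 => 0 < y0 /\ 0 < z0) (fun y0 z0 => Xf k A y0 z0).
Proof.
  intros Hk HA p q [Hp Hq].
  destruct (core k A p q Hk HA Hp ltac:(lra)) as [c [al [M [N [r [Hr [Hal [HM [HN [HrM [HrN [Hc Hid]]]]]]]]]]]].
  exists c, (Rmin r q). split; [apply Rmin_glb_lt; lra|].
  intros u v Hu Hv.
  assert (Hu' : Rabs (u - p) < r) by (eapply Rlt_le_trans; [exact Hu| apply Rmin_l]).
  assert (Hv' : Rabs (v - q) < r) by (eapply Rlt_le_trans; [exact Hv| apply Rmin_l]).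
  assert (Hvq : Rabs (v - q) < q) by (eapply Rlt_le_trans; [exact Hv| apply Rmin_r]).
  set (tau := u - p) in *. set (w := v - q) in *.
  assert (Htau : M * Rabs tau <= / 2) by (assert (M * Rabs tau <= M * r) by (apply Rmult_le_compat_l; lra); lra).
  assert (Hw : N * Rabs w <= / 2) by (assert (N * Rabs w <= N * r) by (apply Rmult_le_compat_l; lra); lra).
  destruct (double_bounds c al M N tau w Hc ltac:(lra) ltac:(lra) Htau Hw) as [D1 D2].
  split; [exact D1|]. split; [exact D2|].
  assert (Hrow : forall i j, Rabs (c i j) <= (al * M ^ i) * N ^ j) by (intros; apply Hc).
  set (ev0 := fun i => PSeries (c i) w).
  assert (Hev : forall i, Rabs (ev0 i) <= (2 * al) * M ^ i).
  { intros i. unfold ev0. pose proof (PSeries_abs_bound (c i) _ N w (Hrow i) ltac:(lra) Hw). lra. }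
  destruct (ex_abs_geom ev0 (2 * al) M tau Hev ltac:(lra) Htau) as [Eab _].
  assert (Eex : ex_series (fun i => ev0 i * tau ^ i)) by (apply ex_series_Rabs; exact Eab).
  pose proof (Series_correct _ Eex) as SC.
  assert (HV : Series (fun i => ev0 i * tau ^ i) = Xf k A u v).
  { change (PSeries ev0 tau = Xf k A u v). unfold ev0. rewrite Hid; try lra.
    - unfold tau, w. f_equal; ring.
    - assert (w >= - q) by (unfold Rabs in Hvq; destruct (Rcase_abs w); lra). lra. }
  rewrite HV in SC.
  eapply is_series_ext; [| exact SC].
  intros i. unfold ev0, PSeries. rewrite <- Series_scal_r. apply Series_ext. intros j. ring.
Qed.

Lemma analytic_xc k A : 0 < k -> 0 < A -> analytic_on (fun y0 => 0 < y0) (fun y0 => Xf k A y0 0).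
Proof.
  intros Hk HA p Hp.
  destruct (core k A p 0 Hk HA Hp ltac:(lra)) as [c [al [M [N [r [Hr [Hal [HM [HN [HrM [HrN [Hc Hid]]]]]]]]]]]].
  exists (fun i => c i 0%nat), r. split; [exact Hr|].
  intros t Ht. apply is_pseries_R.
  set (tau := t - p) in *.
  assert (Htau : M * Rabs tau <= / 2) by (assert (M * Rabs tau <= M * r) by (apply Rmult_le_compat_l; lra); lra).
  assert (Hb : forall i, Rabs (c i 0%nat) <= al * M ^ i).
  { intros i. specialize (Hc i 0%nat). simpl in Hc. lra. }
  destruct (ex_abs_geom (fun i => c i 0%nat) al M tau Hb ltac:(lra) Htau) as [Eab _].
  assert (Eex : ex_series (fun i => c i 0%nat * tau ^ i)) by (apply ex_series_Rabs; exact Eab).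
  pose proof (Series_correct _ Eex) as SC.
  replace (Series (fun i => c i 0%nat * tau ^ i)) with (Xf k A t 0) in SC; [exact SC|].
  specialize (Hid tau 0 Ht ltac:(rewrite Rabs_R0; lra) ltac:(lra)).
  replace (p + tau) with t in Hid by (unfold tau; ring). replace (0 + 0) with 0 in Hid by ring.
  rewrite <- Hid. unfold PSeries. apply Series_ext. intros i. f_equal.
  change (PSeries (c i) 0 = c i 0%nat). apply PSeries_0.
Qed.

Lemma ball_R x e y : ball x e y <-> Rabs (y - x) < e.
Proof. reflexivity. Qed.

Lemma at_right_unpack f x0 L : filterlim f (at_right x0) (locally L) ->
  forall eps, 0 < eps -> exists del, 0 < del /\ forall h, x0 < h < x0 + del -> Rabs (f h - L) < eps.
Proof.
  intros H eps He. apply filterlim_locally with (eps := mkposreal eps He) in H.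
  destruct H as [del Hd]. exists del. split; [apply cond_pos|].
  intros h Hh. apply Hd; [| lra]. apply ball_R. rewrite Rabs_right; lra.
Qed.

Lemma at_left_unpack f x0 L : filterlim f (at_left x0) (locally L) ->
  forall eps, 0 < eps -> exists del, 0 < del /\ forall h, x0 - del < h < x0 -> Rabs (f h - L) < eps.
Proof.
  intros H eps He. apply filterlim_locally with (eps := mkposreal eps He) in H.
  destruct H as [del Hd]. exists del. split; [apply cond_pos|].
  intros h Hh. apply Hd; [| lra]. apply ball_R. rewrite Rabs_left; lra.
Qed.

Lemma at_left_pack f x0 L :
  (forall eps, 0 < eps -> exists del, 0 < del /\ forall h, x0 - del < h < x0 -> Rabs (f h - L) < eps) ->
  filterlim f (at_left x0) (locally L).
Proof.
  intros H. apply filterlim_locally. intros eps.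
  destruct (H eps (cond_pos eps)) as [del [Hd Hh]].
  exists (mkposreal del Hd). intros y Hy Hy'. apply ball_R. apply Hh.
  assert (Hy2 : Rabs (y - x0) < del) by exact Hy. rewrite Rabs_left in Hy2 by lra. lra.
Qed.

Lemma small_zero d : (forall eps, 0 < eps -> Rabs d < eps) -> d = 0.
Proof.
  intros H. destruct (Req_dec d 0) as [|Hn]; [assumption|].
  pose proof (Rabs_pos_lt d Hn). specialize (H (Rabs d) H0). lra.
Qed.

Lemma deriv_ed f x l : is_derive f x l ->
  forall eps, 0 < eps -> exists del, 0 < del /\ forall h, h <> 0 -> Rabs h < del ->
     Rabs ((f (x + h) - f x) / h - l) < eps.
Proof.
  intros H eps He. apply is_derive_Reals in H. destruct (H eps He) as [del Hd].
  exists del. split; [apply cond_pos|]. intros h Hh Hh'. apply Hd; assumption.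
Qed.

Lemma deriv_cont f x l : is_derive f x l ->
  forall eps, 0 < eps -> exists del, 0 < del /\ forall h, Rabs h < del -> Rabs (f (x + h) - f x) < eps.
Proof.
  intros H eps He.
  destruct (deriv_ed f x l H 1 ltac:(lra)) as [d1 [Hd1 H1]].
  set (m := Rabs l + 1).
  assert (Hm : 0 < m) by (unfold m; pose proof (Rabs_pos l); lra).
  exists (Rmin d1 (eps / m)). split; [apply Rmin_glb_lt; [lra| apply Rdiv_lt_0_compat; lra]|].
  intros h Hh.
  destruct (Req_dec h 0) as [->|Hn].
  - rewrite Rplus_0_r. unfold Rminus. rewrite Rplus_opp_r, Rabs_R0. lra.
  - assert (Hh1 : Rabs h < d1) by (eapply Rlt_le_trans; [exact Hh| apply Rmin_l]).
    assert (Hh2 : Rabs h < eps / m) by (eapply Rlt_le_trans; [exact Hh| apply Rmin_r]).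
    specialize (H1 h Hn Hh1).
    replace (f (x + h) - f x) with (((f (x + h) - f x) / h - l) * h + l * h) by (field; exact Hn).
    eapply Rle_lt_trans; [apply Rabs_triang|]. rewrite !Rabs_mult.
    pose proof (Rabs_pos h). pose proof (Rabs_pos l).
    assert (Rabs ((f (x + h) - f x) / h - l) * Rabs h <= 1 * Rabs h) by (apply Rmult_le_compat_r; lra).
    assert (Rabs h * m < eps) by (apply (Rmult_lt_reg_r (/ m)); [apply Rinv_0_lt_compat; lra|]; field_simplify; lra).
    unfold m in *. nra.
Qed.

Lemma const_int (f : R -> R) lo hi : (forall x, lo < x < hi -> is_derive f x 0) ->
  forall x x', lo < x < hi -> lo < x' < hi -> f x = f x'.
Proof.
  intros H x x' Hx Hx'.
  destruct (MVT_gen f x x' (fun _ => 0)) as [c [Hc E]].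
  - intros y Hy. apply H. unfold Rmin, Rmax in Hy. destruct (Rle_dec x x'); lra.
  - intros y Hy. apply continuity_pt_filterlim. apply (@ex_derive_continuous R_AbsRing R_NormedModule f y).
    exists 0. apply H. unfold Rmin, Rmax in Hy. destruct (Rle_dec x x'); lra.
  - lra.
Qed.

Lemma right_val (y Y : R -> R) x1 l : 0 < x1 -> (forall t, 0 < t < x1 -> y t = Y t) ->
  filterlim y (at_right 0) (locally (y 0)) -> is_derive Y 0 l -> y 0 = Y 0.
Proof.
  intros Hx1 Heq Hc HY. apply Rminus_diag_uniq. apply small_zero. intros eps He.
  destruct (at_right_unpack y 0 (y 0) Hc (eps / 2) ltac:(lra)) as [d1 [Hd1 H1]].
  destruct (deriv_cont Y 0 l HY (eps / 2) ltac:(lra)) as [d2 [Hd2 H2]].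
  set (h := Rmin (Rmin d1 d2) x1 / 2).
  assert (Hm : 0 < Rmin (Rmin d1 d2) x1) by (repeat apply Rmin_glb_lt; lra).
  assert (Hh1 : h < d1) by (unfold h; pose proof (Rmin_l (Rmin d1 d2) x1); pose proof (Rmin_l d1 d2); lra).
  assert (Hh2 : h < d2) by (unfold h; pose proof (Rmin_l (Rmin d1 d2) x1); pose proof (Rmin_r d1 d2); lra).
  assert (Hh3 : h < x1) by (unfold h; pose proof (Rmin_r (Rmin d1 d2) x1); lra).
  assert (Hh0 : 0 < h) by (unfold h; lra).
  specialize (H1 h ltac:(lra)). specialize (H2 h ltac:(rewrite Rabs_right; lra)).
  rewrite Rplus_0_l in H2. rewrite (Heq h ltac:(lra)) in H1.
  replace (y 0 - Y 0) with (- (Y h - y 0) + (Y h - Y 0)) by ring.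
  eapply Rle_lt_trans; [apply Rabs_triang|]. rewrite Rabs_Ropp. lra.
Qed.

Lemma left_quot (y Y : R -> R) x1 z0 l D : 0 < x1 -> (forall t, 0 < t < x1 -> y t = Y t) ->
  filterlim (fun h => (y (x1 + h) - D) / h) (at_left 0) (locally z0) -> is_derive Y x1 l ->
  D = Y x1 /\ z0 = l.
Proof.
  intros Hx1 Heq Hq HY.
  assert (Key : forall eps, 0 < eps -> exists d0, 0 < d0 /\ forall h, - d0 < h < 0 ->
             Rabs ((Y x1 - D) / h - (z0 - l)) < 2 * eps).
  { intros eps He.
    destruct (at_left_unpack _ 0 z0 Hq eps He) as [d1 [Hd1 H1]].
    destruct (deriv_ed Y x1 l HY eps He) as [d2 [Hd2 H2]].
    exists (Rmin (Rmin d1 d2) x1). split; [repeat apply Rmin_glb_lt; lra|].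
    intros h Hh.
    pose proof (Rmin_l (Rmin d1 d2) x1). pose proof (Rmin_r (Rmin d1 d2) x1).
    pose proof (Rmin_l d1 d2). pose proof (Rmin_r d1 d2).
    specialize (H1 h ltac:(lra)). specialize (H2 h ltac:(lra) ltac:(rewrite Rabs_left; lra)).
    rewrite (Heq (x1 + h) ltac:(lra)) in H1.
    replace ((Y x1 - D) / h - (z0 - l)) with (((Y (x1 + h) - D) / h - z0) - ((Y (x1 + h) - Y x1) / h - l))
      by (field; lra).
    eapply Rle_lt_trans; [apply Rabs_triang|]. rewrite Rabs_Ropp. lra. }
  assert (HD : Y x1 - D = 0).
  { apply small_zero. intros eta Heta.
    destruct (Key 1 ltac:(lra)) as [d0 [Hd0 H0]].
    set (m := Rabs (z0 - l) + 2).
    assert (Hm : 0 < m) by (unfold m; pose proof (Rabs_pos (z0 - l)); lra).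
    set (h := - Rmin (d0 / 2) (eta / (2 * m))).
    assert (Hmin : 0 < Rmin (d0 / 2) (eta / (2 * m))) by (apply Rmin_glb_lt; [lra| apply Rdiv_lt_0_compat; lra]).
    assert (Hh : - d0 < h < 0) by (unfold h; pose proof (Rmin_l (d0 / 2) (eta / (2 * m))); lra).
    specialize (H0 h Hh).
    assert (Hq' : Rabs ((Y x1 - D) / h) < m).
    { replace ((Y x1 - D) / h) with (((Y x1 - D) / h - (z0 - l)) + (z0 - l)) by ring.
      eapply Rle_lt_trans; [apply Rabs_triang|]. unfold m. lra. }
    replace (Y x1 - D) with ((Y x1 - D) / h * h) by (field; lra).
    rewrite Rabs_mult. rewrite (Rabs_left h) by lra.
    assert (- h <= eta / (2 * m)) by (unfold h; pose proof (Rmin_r (d0 / 2) (eta / (2 * m))); lra).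
    assert (m * (eta / (2 * m)) = eta / 2) by (field; lra).
    pose proof (Rabs_pos ((Y x1 - D) / h)). nra. }
  split; [lra|].
  apply Rminus_diag_uniq. apply small_zero. intros eps He.
  destruct (Key (eps / 2) ltac:(lra)) as [d0 [Hd0 H0]].
  specialize (H0 (- d0 / 2) ltac:(lra)). rewrite HD in H0.
  replace (0 / (- d0 / 2) - (z0 - l)) with (- (z0 - l)) in H0 by (field; lra).
  rewrite Rabs_Ropp in H0. lra.
Qed.

Definition Ycan (k A y0 z0 x1 t : R) : R :=
  A * t + (z0 - A) * exp (- (k * x1)) / k * exp (k * t) + (- y0 - (z0 - A) * exp (- (k * x1)) / k).

Lemma fbp_char a b c y0 z0 y x1 : 0 < a -> 0 < b -> 0 < c -> 0 < x1 -> fbp_sol a b c y0 z0 y x1 ->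
  Ff (b / a) (c / b) x1 z0 = y0 /\ forall t, 0 <= t <= x1 -> y t = Ycan (b / a) (c / b) y0 z0 x1 t.
Proof.
  intros Ha Hb Hc Hx1 [[dy [ddy HD]] [Hc0 [Hy1 [Hy0 Hq]]]].
  set (k := b / a) in *. set (A := c / b) in *.
  assert (Hk : 0 < k) by (unfold k; apply Rdiv_lt_0_compat; lra).
  assert (HA : 0 < A) by (unfold A; apply Rdiv_lt_0_compat; lra).
  assert (Hak : a * k = b) by (unfold k; field; lra).
  assert (HbA : b * A = c) by (unfold A; field; lra).
  set (g := fun x => (dy x - A) * exp (- (k * x))).
  assert (Hg : forall x, 0 < x < x1 -> is_derive g x 0).
  { intros x Hx. destruct (HD x Hx) as [H1 [H2 H3]].
    evar (d : R). replace 0 with d.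
    - unfold d, g. auto_derive; [solve_ex|]. dsub H2. reflexivity.
    - unfold d. assert (ddy x = k * dy x - k * A).
      { apply (Rmult_eq_reg_l a); [| lra]. rewrite Rmult_minus_distr_l, <- !Rmult_assoc, Hak. nra. }
      rewrite H. ring. }
  set (K1 := g (x1 / 2)).
  assert (Hdy : forall x, 0 < x < x1 -> dy x = A + K1 * exp (k * x)).
  { intros x Hx. assert (E : g x = K1) by (apply (const_int g 0 x1); [exact Hg| exact Hx| lra]).
    unfold g in E. rewrite <- E. rewrite Rmult_assoc, <- exp_plus.
    replace (- (k * x) + k * x) with 0 by ring. rewrite exp_0. ring. }
  set (h := fun x => y x - A * x - K1 / k * exp (k * x)).
  assert (Hh : forall x, 0 < x < x1 -> is_derive h x 0).
  { intros x Hx. destruct (HD x Hx) as [H1 [H2 H3]].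
    evar (d : R). replace 0 with d.
    - unfold d, h. auto_derive; [solve_ex|]. dsub H1. reflexivity.
    - unfold d. rewrite (Hdy x Hx). field. lra. }
  set (L1 := h (x1 / 2)).
  set (Y := fun t => A * t + K1 / k * exp (k * t) + L1).
  assert (HyY : forall t, 0 < t < x1 -> y t = Y t).
  { intros t Ht. assert (E : h t = L1) by (apply (const_int h 0 x1); [exact Hh| exact Ht| lra]).
    unfold h in E. unfold Y. lra. }
  assert (HYd : forall t, is_derive Y t (A + K1 * exp (k * t))).
  { intros t. unfold Y. auto_derive; [auto|]. field. lra. }
  assert (E0 : y 0 = Y 0) by (apply (right_val y Y x1 (A + K1 * exp (k * 0))); auto).
  destruct (left_quot y Y x1 z0 (A + K1 * exp (k * x1)) (y x1) Hx1 HyY Hq (HYd x1)) as [E1 E2].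
  assert (HK1 : K1 = (z0 - A) * exp (- (k * x1))).
  { rewrite E2. replace (A + K1 * exp (k * x1) - A) with (K1 * exp (k * x1)) by ring.
    rewrite Rmult_assoc, <- exp_plus. replace (k * x1 + - (k * x1)) with 0 by ring. rewrite exp_0. ring. }
  assert (HL1 : L1 = - y0 - K1 / k).
  { unfold Y in E0. rewrite Hy0 in E0. replace (k * 0) with 0 in E0 by ring. rewrite exp_0 in E0. lra. }
  assert (HYc : forall t, Y t = Ycan k A y0 z0 x1 t).
  { intros t. unfold Y, Ycan. rewrite HL1, HK1. reflexivity. }
  split.
  - unfold Ff. rewrite Hy1 in E1. unfold Y in E1, E0. rewrite Hy0 in E0.
    replace (k * 0) with 0 in E0 by ring. rewrite exp_0 in E0.
    rewrite HK1 in E1, E0.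
    assert (Hee : exp (- (k * x1)) * exp (k * x1) = 1).
    { rewrite <- exp_plus. replace (- (k * x1) + k * x1) with 0 by ring. apply exp_0. }
    set (e := exp (- (k * x1))) in *. set (E := exp (k * x1)) in *.
    assert (Q : (z0 - A) * e / k * E = (z0 - A) / k).
    { replace ((z0 - A) * e / k * E) with ((z0 - A) / k * (e * E)) by (field; lra). rewrite Hee. ring. }
    assert (HL : L1 = - A * x1 - (z0 - A) / k) by lra.
    assert (Hy : y0 = - ((z0 - A) * e / k * 1) - L1) by lra.
    rewrite Hy, HL. field. lra.
  - intros t Ht. destruct (Req_dec t 0) as [->|Ht0].
    + rewrite Hy0, <- HYc. unfold Y. rewrite HL1. replace (k * 0) with 0 by ring. rewrite exp_0. field. lra.
    + destruct (Req_dec t x1) as [->|Ht1].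
      * rewrite <- HYc. exact E1.
      * rewrite <- HYc. apply HyY. lra.
Qed.

Lemma fbp_exist a b c y0 z0 x1 : 0 < a -> 0 < b -> 0 < c -> Ff (b / a) (c / b) x1 z0 = y0 ->
  fbp_sol a b c y0 z0 (Ycan (b / a) (c / b) y0 z0 x1) x1.
Proof.
  intros Ha Hb Hc HF.
  set (k := b / a) in *. set (A := c / b) in *.
  assert (Hk : 0 < k) by (unfold k; apply Rdiv_lt_0_compat; lra).
  assert (Hak : a * k = b) by (unfold k; field; lra).
  assert (HbA : b * A = c) by (unfold A; field; lra).
  set (K := (z0 - A) * exp (- (k * x1))).
  set (Y := Ycan k A y0 z0 x1).
  assert (HYd : forall t, is_derive Y t (A + K * exp (k * t))).
  { intros t. unfold Y, Ycan. fold K. auto_derive; [auto|]. field. lra. }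
  assert (Hee : exp (- (k * x1)) * exp (k * x1) = 1).
  { rewrite <- exp_plus. replace (- (k * x1) + k * x1) with 0 by ring. apply exp_0. }
  split; [| split; [| split; [| split]]].
  - exists (fun t => A + K * exp (k * t)), (fun t => k * K * exp (k * t)).
    intros x Hx. split; [apply HYd|]. split.
    + auto_derive; [auto|]. ring.
    + replace (b * (A + K * exp (k * x))) with (b * A + (a * k) * K * exp (k * x)) by (rewrite Hak; ring).
      rewrite HbA. ring.
  - apply (filterlim_filter_le_1 (F := locally 0)); [apply filter_le_within|].
    apply (@ex_derive_continuous R_AbsRing R_NormedModule Y 0). eexists. apply HYd.
  - unfold Y, Ycan. fold K. rewrite <- HF. unfold Ff. fold K.
    replace (K / k * exp (k * x1)) with ((z0 - A) / k * (exp (- (k * x1)) * exp (k * x1))) by (unfold K; field; lra).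
    rewrite Hee. unfold K. field. lra.
  - unfold Y, Ycan. fold K. replace (k * 0) with 0 by ring. rewrite exp_0. ring.
  - apply at_left_pack. intros eps He.
    destruct (deriv_ed Y x1 _ (HYd x1) eps He) as [d [Hd H]].
    exists d. split; [exact Hd|]. intros h Hh.
    replace z0 with (A + K * exp (k * x1)).
    + apply H; [lra| rewrite Rabs_left; lra].
    + unfold K. rewrite Rmult_assoc, Hee. ring.
Qed.

Lemma at_right_pack f x0 L :
  (forall eps, 0 < eps -> exists del, 0 < del /\ forall h, x0 < h < x0 + del -> Rabs (f h - L) < eps) ->
  filterlim f (at_right x0) (locally L).
Proof.
  intros H. apply filterlim_locally. intros eps.
  destruct (H eps (cond_pos eps)) as [del [Hd Hh]].
  exists (mkposreal del Hd). intros y Hy Hy'. apply ball_R. apply Hh.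
  assert (Hy2 : Rabs (y - x0) < del) by exact Hy. rewrite Rabs_right in Hy2 by lra. lra.
Qed.

Lemma pinf_pack f : (forall M, exists M', forall x, M' < x -> M < f x) ->
  filterlim f (Rbar_locally p_infty) (Rbar_locally p_infty).
Proof.
  intros H P [M HP]. destruct (H M) as [M' HM']. exists M'. intros x Hx. apply HP. apply HM'. exact Hx.
Qed.

Lemma pinf_loc_pack f L : (forall eps, 0 < eps -> exists M', forall x, M' < x -> Rabs (f x - L) < eps) ->
  filterlim f (Rbar_locally p_infty) (locally L).
Proof.
  intros H. apply filterlim_locally. intros eps.
  destruct (H eps (cond_pos eps)) as [M' HM']. exists M'. intros x Hx. apply ball_R. apply HM'. exact Hx.
Qed.


Lemma Ff_lower k A x z : 0 < k -> 0 < A -> 0 < x -> 0 <= z -> z * phi k x <= Ff k A x z.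
Proof. intros Hk HA Hx Hz. rewrite Ff_phi by lra. destruct (phi_bounds k x Hk Hx) as [[P1 P2] P3]. nra. Qed.

Lemma Ff_upper k A x z : 0 < k -> 0 < A -> 0 < x -> 0 <= z -> Ff k A x z <= A * x + z / k.
Proof.
  intros Hk HA Hx Hz. rewrite Ff_phi by lra. destruct (phi_bounds k x Hk Hx) as [[P1 P2] P3].
  assert (z * phi k x <= z / k) by (unfold Rdiv; apply Rmult_le_compat_l; lra). nra.
Qed.

Lemma Ff_z_incr k A x z1 z2 : 0 < k -> 0 < x -> z1 < z2 -> Ff k A x z1 < Ff k A x z2.
Proof.
  intros Hk Hx Hz. rewrite !Ff_phi by lra. destruct (phi_bounds k x Hk Hx) as [[P1 P2] P3]. nra.
Qed.

Lemma Xf_mono_y k A z y1 y2 : 0 < k -> 0 < A -> 0 <= z -> 0 < y1 -> y1 < y2 -> Xf k A y1 z < Xf k A y2 z.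
Proof.
  intros Hk HA Hz H1 H12.
  destruct (Xf_spec k A y1 z Hk HA H1 Hz) as [P1 F1].
  destruct (Xf_spec k A y2 z Hk HA ltac:(lra) Hz) as [P2 F2].
  destruct (Rlt_le_dec (Xf k A y1 z) (Xf k A y2 z)) as [|Hle]; [assumption|].
  destruct (Req_dec (Xf k A y2 z) (Xf k A y1 z)) as [E|Ne].
  - rewrite E in F2. lra.
  - pose proof (Ff_incr k A z (Xf k A y2 z) (Xf k A y1 z) Hk HA Hz ltac:(lra) ltac:(lra)). lra.
Qed.

Lemma Xf_mono_z k A y z1 z2 : 0 < k -> 0 < A -> 0 < y -> 0 <= z1 -> z1 < z2 -> Xf k A y z2 < Xf k A y z1.
Proof.
  intros Hk HA Hy H1 H12.
  destruct (Xf_spec k A y z1 Hk HA Hy H1) as [P1 F1].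
  destruct (Xf_spec k A y z2 Hk HA Hy ltac:(lra)) as [P2 F2].
  destruct (Rlt_le_dec (Xf k A y z2) (Xf k A y z1)) as [|Hle]; [assumption|].
  pose proof (Ff_z_incr k A (Xf k A y z2) z1 z2 Hk P2 H12).
  destruct (Req_dec (Xf k A y z1) (Xf k A y z2)) as [E|Ne].
  - rewrite E in F1. lra.
  - pose proof (Ff_incr k A z1 (Xf k A y z1) (Xf k A y z2) Hk HA H1 ltac:(lra) ltac:(lra)). lra.
Qed.

Lemma Xf_lt_of k A y z x : 0 < k -> 0 < A -> 0 < y -> 0 <= z -> 0 < x -> y < Ff k A x z -> Xf k A y z < x.
Proof.
  intros Hk HA Hy Hz Hx H.
  destruct (Xf_spec k A y z Hk HA Hy Hz) as [P F].
  destruct (Rlt_le_dec (Xf k A y z) x) as [|Hle]; [assumption|].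
  destruct (Req_dec x (Xf k A y z)) as [E|Ne].
  - rewrite <- E in F. lra.
  - pose proof (Ff_incr k A z x (Xf k A y z) Hk HA Hz ltac:(lra) ltac:(lra)). lra.
Qed.

Lemma Xf_gt_of k A y z x : 0 < k -> 0 < A -> 0 < y -> 0 <= z -> 0 < x -> Ff k A x z < y -> x < Xf k A y z.
Proof.
  intros Hk HA Hy Hz Hx H.
  destruct (Xf_spec k A y z Hk HA Hy Hz) as [P F].
  destruct (Rlt_le_dec x (Xf k A y z)) as [|Hle]; [assumption|].
  destruct (Req_dec x (Xf k A y z)) as [E|Ne].
  - rewrite <- E in F. lra.
  - pose proof (Ff_incr k A z (Xf k A y z) x Hk HA Hz ltac:(lra) ltac:(lra)). lra.
Qed.

Lemma Xf_lim_y_inf k A z : 0 < k -> 0 < A -> 0 <= z ->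
  filterlim (fun y => Xf k A y z) (Rbar_locally p_infty) (Rbar_locally p_infty).
Proof.
  intros Hk HA Hz. apply pinf_pack. intros M.
  set (M1 := Rmax M 1).
  exists (A * M1 + z / k + 1). intros y Hy.
  assert (HM1 : 1 <= M1) by (unfold M1; apply Rmax_r).
  assert (Hzk : 0 <= z / k) by (apply Rdiv_le_0_compat; lra).
  assert (Hy0 : 0 < y) by nra.
  apply Rle_lt_trans with M1; [apply Rmax_l|].
  apply Xf_gt_of; try lra.
  pose proof (Ff_upper k A M1 z Hk HA ltac:(lra) Hz). lra.
Qed.

Lemma Xf_lim_y_0 k A z : 0 < k -> 0 < A -> 0 < z ->
  filterlim (fun y => Xf k A y z) (at_right 0) (locally 0).
Proof.
  intros Hk HA Hz. apply at_right_pack. intros eps He.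
  destruct (phi_bounds k eps Hk He) as [[P1 P2] P3].
  exists (z * phi k eps). split; [nra|]. intros h Hh.
  destruct (Xf_spec k A h z Hk HA ltac:(lra) ltac:(lra)) as [P F].
  rewrite Rminus_0_r, Rabs_right by lra.
  apply Xf_lt_of; try lra. pose proof (Ff_lower k A eps z Hk HA He ltac:(lra)). lra.
Qed.

Lemma Xf_lim_z_inf k A y : 0 < k -> 0 < A -> 0 < y ->
  filterlim (fun z => Xf k A y z) (Rbar_locally p_infty) (locally 0).
Proof.
  intros Hk HA Hy. apply pinf_loc_pack. intros eps He.
  destruct (phi_bounds k eps Hk He) as [[P1 P2] P3].
  exists (y / phi k eps). intros z Hz.
  assert (Hz0 : 0 < z) by (assert (0 < y / phi k eps) by (apply Rdiv_lt_0_compat; lra); lra).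
  destruct (Xf_spec k A y z Hk HA Hy ltac:(lra)) as [P F].
  rewrite Rminus_0_r, Rabs_right by lra.
  apply Xf_lt_of; try lra. pose proof (Ff_lower k A eps z Hk HA He ltac:(lra)).
  assert (y < z * phi k eps).
  { apply (Rmult_lt_reg_r (/ phi k eps)); [apply Rinv_0_lt_compat; lra|].
    replace (z * phi k eps * / phi k eps) with z by (field; lra). exact Hz. }
  lra.
Qed.

Lemma Xf_lim_z_0 k A y : 0 < k -> 0 < A -> 0 < y ->
  filterlim (fun z => Xf k A y z) (at_right 0) (locally (Xf k A y 0)).
Proof.
  intros Hk HA Hy. apply at_right_pack. intros eps He.
  destruct (Xf_spec k A y 0 Hk HA Hy ltac:(lra)) as [Pc Fc].
  set (xc := Xf k A y 0) in *.
  destruct (Rle_lt_dec (xc - eps) 0) as [Hle|Hgt].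
  - exists 1. split; [lra|]. intros h Hh.
    destruct (Xf_spec k A y h Hk HA Hy ltac:(lra)) as [P F].
    pose proof (Xf_mono_z k A y 0 h Hk HA Hy ltac:(lra) ltac:(lra)). fold xc in H.
    rewrite Rabs_left by lra. lra.
  - set (x' := xc - eps).
    assert (Fx' : Ff k A x' 0 < y) by (rewrite <- Fc; apply Ff_incr; unfold x'; lra).
    destruct (phi_bounds k x' Hk Hgt) as [[P1 P2] P3].
    exists ((y - Ff k A x' 0) / phi k x'). split; [apply Rdiv_lt_0_compat; lra|].
    intros h Hh.
    pose proof (Xf_mono_z k A y 0 h Hk HA Hy ltac:(lra) ltac:(lra)). fold xc in H.
    assert (Hlow : x' < Xf k A y h).
    { apply Xf_gt_of; try lra. rewrite Ff_phi by lra. rewrite Ff_phi in Fx' by lra.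
      assert (h * phi k x' < y - Ff k A x' 0).
      { apply (Rmult_lt_reg_r (/ phi k x')); [apply Rinv_0_lt_compat; lra|].
        replace (h * phi k x' * / phi k x') with h by (field; lra).
        replace ((y - Ff k A x' 0) * / phi k x') with ((y - Ff k A x' 0) / phi k x') by reflexivity. lra. }
      rewrite Ff_phi in H0 by lra. lra. }
    rewrite Rabs_left by lra. unfold x' in Hlow. lra.
Qed.

Lemma xc_lim_0 k A : 0 < k -> 0 < A -> filterlim (fun y => Xf k A y 0) (at_right 0) (locally 0).
Proof.
  intros Hk HA. apply at_right_pack. intros eps He.
  destruct (phi_bounds k eps Hk He) as [[P1 P2] P3].
  exists (A * (eps - phi k eps)). split; [nra|]. intros h Hh.
  destruct (Xf_spec k A h 0 Hk HA ltac:(lra) ltac:(lra)) as [P F].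
  rewrite Rminus_0_r, Rabs_right by lra.
  apply Xf_lt_of; try lra. rewrite Ff_phi by lra. lra.
Qed.
Theorem lemma4p2 (a b c : R) (ha : 0 < a) (hb : 0 < b) (hc : 0 < c) :
  exists xh : R -> R -> R,
    (* existence and uniqueness of (y, xh) for every y0, z0 > 0 *)
    (forall y0 z0, 0 < y0 -> 0 < z0 ->
       0 < xh y0 z0 /\
       (exists y, fbp_sol a b c y0 z0 y (xh y0 z0)) /\
       (forall y1 x1 y2 x2, 0 < x1 -> 0 < x2 ->
          fbp_sol a b c y0 z0 y1 x1 -> fbp_sol a b c y0 z0 y2 x2 ->
          x1 = x2 /\ (forall t, 0 <= t <= x1 -> y1 t = y2 t))) /\
    (* monotonicity *)
    (forall z0 y1 y2, 0 < z0 -> 0 < y1 -> y1 < y2 -> xh y1 z0 < xh y2 z0) /\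
    (forall y0 z1 z2, 0 < y0 -> 0 < z1 -> z1 < z2 -> xh y0 z2 < xh y0 z1) /\
    (* limits in y0 *)
    (forall z0, 0 < z0 ->
       filterlim (fun y0 => xh y0 z0) (Rbar_locally p_infty) (Rbar_locally p_infty) /\
       filterlim (fun y0 => xh y0 z0) (at_right 0) (locally 0)) /\
    (* limit z0 -> oo *)
    (forall y0, 0 < y0 ->
       filterlim (fun z0 => xh y0 z0) (Rbar_locally p_infty) (locally 0)) /\
    (* the critical value xh_c *)
    (exists xc : R -> R,
       (forall y0, 0 < y0 -> 0 < xc y0) /\
       (forall y0, 0 < y0 ->
          filterlim (fun z0 => xh y0 z0) (at_right 0) (locally (xc y0))) /\
       (forall y1 y2, 0 < y1 -> y1 < y2 -> xc y1 < xc y2) /\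
       filterlim xc (at_right 0) (locally 0) /\
       filterlim xc (Rbar_locally p_infty) (Rbar_locally p_infty) /\
       analytic_on (fun y0 => 0 < y0) xc) /\
    (* analytic dependence of xh on (y0, z0) *)
    analytic2_on (fun y0 z0 => 0 < y0 /\ 0 < z0) xh.
Proof.
  set (k := b / a). set (A := c / b).
  assert (Hk : 0 < k) by (unfold k; apply Rdiv_lt_0_compat; lra).
  assert (HA : 0 < A) by (unfold A; apply Rdiv_lt_0_compat; lra).
  exists (fun y0 z0 => Xf k A y0 z0).
  split; [| split; [| split; [| split; [| split; [| split]]]]].
  - intros y0 z0 Hy Hz. destruct (Xf_spec k A y0 z0 Hk HA Hy ltac:(lra)) as [P F].
    split; [exact P|]. split.
    + exists (Ycan k A y0 z0 (Xf k A y0 z0)). apply fbp_exist; assumption.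
    + intros y1 x1 y2 x2 Hx1 Hx2 S1 S2.
      destruct (fbp_char a b c y0 z0 y1 x1 ha hb hc Hx1 S1) as [F1 E1].
      destruct (fbp_char a b c y0 z0 y2 x2 ha hb hc Hx2 S2) as [F2 E2].
      fold k A in F1, F2, E1, E2.
      assert (Hx : x1 = x2) by (apply (Ff_inj k A z0); lra).
      split; [exact Hx|]. intros t Ht. rewrite (E1 t Ht). rewrite (E2 t ltac:(lra)). rewrite Hx. reflexivity.
  - intros z0 y1 y2 Hz H1 H12. apply Xf_mono_y; lra.
  - intros y0 z1 z2 Hy H1 H12. apply Xf_mono_z; lra.
  - intros z0 Hz. split; [apply Xf_lim_y_inf; lra| apply Xf_lim_y_0; lra].
  - intros y0 Hy. apply Xf_lim_z_inf; lra.
  - exists (fun y0 => Xf k A y0 0).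
    split; [| split; [| split; [| split; [| split]]]].
    + intros y0 Hy. apply (Xf_spec k A y0 0 Hk HA Hy ltac:(lra)).
    + intros y0 Hy. apply Xf_lim_z_0; lra.
    + intros y1 y2 H1 H12. apply Xf_mono_y; lra.
    + apply xc_lim_0; lra.
    + apply Xf_lim_y_inf; lra.
    + apply analytic_xc; lra.
  - apply analytic2_Xf; lra.
Qed.
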